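(* In the setting where $\alpha\in(0,1)$ and $\lambda_1,\dots,\lambda_r\in\mathbb{C}$ are distinct with multiplicities $n_1,\dots,n_r\ge1$, consider $$({}^LD^\alpha-\lambda_1)^{n_1}\circ\cdots\circ({}^LD^\alpha-\lambda_r)^{n_r}x(t)=\sum_{j=0}^J\beta_jt^j\mathcal{E}_\alpha^{(j)}(\mu t),$$ with $\beta_j,\mu\in\mathbb{C}$, $J\ge0$, and any initial values $x(0),{}^LD^\alpha x(0),\dots,{}^LD^{(m-1)\circ\alpha}x(0)$, $m=n_1+\dots+n_r$. If $\mu\neq\lambda_l$ for all $l$, the solution $x$ lies in the span of $\mathcal{B}\cup\{t^j\mathcal{E}_\alpha^{(j)}(\mu t):j=0,\dots,J\}$. If $\mu=\lambda_{l_0}$ for some $l_0$, then $x$ lies in the span of $\big(\bigcup_{l\neq l_0}\mathcal{B}_{\lambda_l,n_l}\big)\cup\{t^k\mathcal{E}_\alpha^{(k)}(\lambda_{l_0}t):k=0,\dots,J+n_{l_0}\}$.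
   Context: $\mathcal{E}_\alpha(s)=\sum_{n=0}^\infty\frac{s^n}{\Gamma(2-\alpha)^n\prod_{j=1}^n\frac{\Gamma(j+1)}{\Gamma(j+1-\alpha)}}$ (entire), $\mathcal{E}_\alpha^{(k)}$ its $k$-th ordinary derivative. $\mathcal{B}_{\lambda_l,n_l}=\{t^k\mathcal{E}_\alpha^{(k)}(\lambda_lt):k=0,\dots,n_l-1\}$ and $\mathcal{B}=\bigcup_l\mathcal{B}_{\lambda_l,n_l}$. Solutions are taken among functions on $[0,\infty)$ given by everywhere convergent power series, with the equation holding for all $t\ge0$. ${}^LD^\alpha x(t)=\frac{\Gamma(2-\alpha)}{t^{1-\alpha}}\cdot\frac{1}{\Gamma(1-\alpha)}\int_0^t (t-\tau)^{-\alpha}x'(\tau)d\tau$ for $t>0$, acting termwise on power series: ${}^LD^\alpha\sum_nx_nt^n=\sum_nx_{n+1}\frac{\Gamma(n+2)\Gamma(2-\alpha)}{\Gamma(n+2-\alpha)}t^n$ (also defining the value at $t=0$). ${}^LD^{k\circ\alpha}$ and $({}^LD^\alpha-\lambda)^k$ denote $k$-fold compositions. *)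

(* Defs.v *)
From Stdlib Require Import Reals List Factorial.
From Coquelicot Require Import Coquelicot.
Import ListNotations.
Open Scope R_scope.

Notation CC := Complex.C.

Definition Gamma (x : R) : R :=
  RInt_gen (fun t => Rpower t (x - 1) * exp (- t)) (at_right 0) (Rbar_locally p_infty).

(* Sum of a complex series (real and imaginary parts summed separately;
   this is the complex sum whenever the series converges). *)
Definition csum (a : nat -> CC) : CC :=
  (Series (fun n => Re (a n)), Series (fun n => Im (a n))).

Definition fsum (n : nat) (f : nat -> CC) : CC :=
  fold_right Cplus (RtoC 0) (map f (seq 0 n)).

Definition pseries_eval (a : nat -> CC) (t : R) : CC :=
  csum (fun n => (a n * (RtoC t) ^ n)%C).

Definition entire_coeffs (a : nat -> CC) : Prop :=
  forall z : CC, ex_series (fun n => (a n * z ^ n)%C).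

(* Coefficient of s^n in E_alpha:
   1 / (Gamma(2-alpha)^n * prod_{j=1}^n Gamma(j+1)/Gamma(j+1-alpha)) *)
Fixpoint Ecoef (alpha : R) (n : nat) : R :=
  match n with
  | O => 1
  | S m => Ecoef alpha m /
           (Gamma (2 - alpha) * (Gamma (INR (S m) + 1) / Gamma (INR (S m) + 1 - alpha)))
  end.

(* k-th derivative of the entire function E_alpha, as the k-times
   termwise differentiated power series:
   E^(k)(s) = sum_n Ecoef(n+k) * (n+k)!/n! * s^n *)
Definition Eder (alpha : R) (k : nat) (s : CC) : CC :=
  csum (fun n => (RtoC (Ecoef alpha (n + k) * INR (fact (n + k)) / INR (fact n)) * s ^ n)%C).

Definition Ebasis (alpha : R) (k : nat) (lam : CC) (t : R) : CC :=
  ((RtoC t) ^ k * Eder alpha k (lam * RtoC t))%C.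

(* ^L D^alpha acting termwise on power series coefficients:
   (D x)_n = x_{n+1} Gamma(n+2) Gamma(2-alpha) / Gamma(n+2-alpha) *)
Definition LD (alpha : R) (a : nat -> CC) : nat -> CC :=
  fun n => (a (S n) * RtoC (Gamma (INR n + 2) * Gamma (2 - alpha) / Gamma (INR n + 2 - alpha)))%C.

Definition LDsub (alpha : R) (lam : CC) (a : nat -> CC) : nat -> CC :=
  fun n => (LD alpha a n - lam * a n)%C.

Definition LDpoly (alpha : R) (r : nat) (lam : nat -> CC) (mult : nat -> nat)
  (a : nat -> CC) : nat -> CC :=
  fold_right (fun l acc => Nat.iter (mult l) (LDsub alpha (lam l)) acc) a (seq 0 r).

(* Main.v *)
Require Import Defs.
From Stdlib Require Import Reals Lra Lia List Factorial FunctionalExtensionality Classical.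
From Coquelicot Require Import Coquelicot.
Open Scope R_scope.

Section GL.
Variable f : R -> R.
Hypothesis Hc : forall t, 0 < t -> continuous f t.
Hypothesis Hp : forall t, 0 < t -> 0 <= f t.

Definition Fi (b : R) := RInt f 1 b.

Lemma exR a b : 0 < a -> 0 < b -> ex_RInt f a b.
Proof.
  intros Ha Hb. apply (ex_RInt_continuous (V:=R_CompleteNormedModule)). intros z Hz. apply Hc.
  destruct Hz as [Hz _]. eapply Rlt_le_trans; [|exact Hz].
  unfold Rmin; destruct (Rle_dec a b); lra.
Qed.

Lemma Fi_diff a b : 0 < a -> 0 < b -> RInt f a b = Fi b - Fi a.
Proof.
  intros Ha Hb. unfold Fi.
  pose proof (RInt_Chasles f 1 a b (exR 1 a ltac:(lra) Ha) (exR a b Ha Hb)) as H.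
  change (plus ?x ?y) with (x + y) in H. lra.
Qed.

Lemma Fi_mono a b : 0 < a -> a <= b -> Fi a <= Fi b.
Proof.
  intros Ha Hab. assert (0 <= RInt f a b).
  { apply RInt_ge_0; auto. apply exR; lra. intros x Hx; apply Hp; lra. }
  rewrite Fi_diff in H; lra.
Qed.

Lemma Fi_1 : Fi 1 = 0.
Proof. unfold Fi. rewrite RInt_point. reflexivity. Qed.

Lemma GL :
  (exists M, forall b, 1 <= b -> Fi b <= M) ->
  (exists m, forall a, 0 < a <= 1 -> m <= Fi a) ->
  exists Lb La,
    (forall b, 0 < b -> Fi b <= Lb) /\
    (forall u, (forall b, 0 < b -> Fi b <= u) -> Lb <= u) /\
    (forall a, 0 < a -> La <= Fi a) /\
    (forall u, (forall a, 0 < a -> u <= Fi a) -> u <= La) /\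
    RInt_gen f (at_right 0) (Rbar_locally p_infty) = Lb - La.
Proof.
  intros [M HM] [m Hm].
  pose (E := fun y => exists b, 0 < b /\ y = Fi b).
  assert (HE : bound E).
  { exists M. intros y [b [Hb ->]]. destruct (Rle_dec 1 b).
    - apply HM; auto.
    - apply Rle_trans with (Fi 1). apply Fi_mono; lra. apply HM; lra. }
  destruct (completeness E HE) as [Lb [HLb1 HLb2]].
  { exists (Fi 1); exists 1; split; [lra|auto]. }
  pose (E' := fun y => exists a, 0 < a /\ y = - Fi a).
  assert (HE' : bound E').
  { exists (-m). intros y [a [Ha ->]]. destruct (Rle_dec a 1).
    - assert (m <= Fi a) by (apply Hm; lra). lra.
    - assert (Fi 1 <= Fi a) by (apply Fi_mono; lra).
      assert (m <= Fi 1) by (apply Hm; lra). lra. }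
  destruct (completeness E' HE') as [Na [HNa1 HNa2]].
  { exists (- Fi 1); exists 1; split; [lra|auto]. }
  assert (P1 : forall b, 0 < b -> Fi b <= Lb).
  { intros b Hb. apply HLb1. exists b; auto. }
  assert (P2 : forall u, (forall b, 0 < b -> Fi b <= u) -> Lb <= u).
  { intros u Hu. apply HLb2. intros y [b [Hb ->]]. auto. }
  assert (P3 : forall a, 0 < a -> - Na <= Fi a).
  { intros a Ha. assert (- Fi a <= Na) by (apply HNa1; exists a; auto). lra. }
  assert (P4 : forall u, (forall a, 0 < a -> u <= Fi a) -> u <= - Na).
  { intros u Hu. assert (Na <= - u); [|lra]. apply HNa2. intros y [a [Ha ->]].
    specialize (Hu a Ha). lra. }
  exists Lb, (- Na). repeat split; auto.
  apply is_RInt_gen_unique.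
  intros P [eps HP].
  unfold filtermapi.
  assert (Hb0 : exists b0, 0 < b0 /\ Lb - eps/2 < Fi b0).
  { destruct (Classical_Prop.classic (exists b0, 0 < b0 /\ Lb - eps/2 < Fi b0)) as [H|H]; auto.
    exfalso. assert (Lb <= Lb - eps/2).
    { apply P2. intros b Hb. apply Rnot_lt_le. intro Hc'. apply H. exists b; auto. }
    destruct eps; simpl in *; lra. }
  assert (Ha0 : exists a0, 0 < a0 /\ Fi a0 < - Na + eps/2).
  { destruct (Classical_Prop.classic (exists a0, 0 < a0 /\ Fi a0 < - Na + eps/2)) as [H|H]; auto.
    exfalso. assert (- Na + eps/2 <= - Na).
    { apply P4. intros a Ha. apply Rnot_lt_le. intro Hc'. apply H. exists a; auto. }
    destruct eps; simpl in *; lra. }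
  destruct Hb0 as [b0 [Hb0 Hb0']]. destruct Ha0 as [a0 [Ha0 Ha0']].
  apply (Filter_prod _ _ _ (fun a => 0 < a < a0) (fun b => b0 < b)).
  - exists (mkposreal a0 Ha0). intros y Hy Hy0. split; auto.
    unfold ball in Hy; simpl in Hy; unfold AbsRing_ball in Hy; simpl in Hy.
    unfold abs, minus, plus, opp in Hy; simpl in Hy. apply Rabs_lt_between in Hy. lra.
  - exists b0. auto.
  - intros a b [Ha Ha1] Hb. simpl. exists (Fi b - Fi a). split.
    + rewrite <- Fi_diff by lra. apply RInt_correct. apply exR; lra.
    + apply HP. unfold ball; simpl; unfold AbsRing_ball; simpl.
      unfold abs, minus, plus, opp; simpl.
      assert (Fi a <= Fi a0) by (apply Fi_mono; lra).
      assert (Fi b0 <= Fi b) by (apply Fi_mono; lra).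
      specialize (P1 b ltac:(lra)). specialize (P3 a Ha).
      apply Rabs_def1; destruct eps; simpl in *; lra.
Qed.
End GL.

Definition gf (x : R) (t : R) := Rpower t (x - 1) * exp (- t).

Lemma exp_le_mono a b : a <= b -> exp a <= exp b.
Proof. intros H. destruct (Rle_lt_or_eq_dec a b H) as [H'|H'].
  left; apply exp_increasing; auto. subst; lra. Qed.

Lemma gf_cont x t : 0 < t -> continuous (gf x) t.
Proof.
  intros Ht. apply continuity_pt_filterlim. unfold gf.
  apply continuity_pt_mult.
  - apply derivable_continuous_pt. exists ((x-1) * Rpower t (x-1-1)).
    apply derivable_pt_lim_power; auto.
  - apply continuity_pt_comp with (f1 := fun t => - t) (f2 := exp).
    apply continuity_pt_opp, continuity_pt_id. apply derivable_continuous_pt, derivable_pt_exp.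
Qed.

Lemma gf_pos x t : 0 < t -> 0 < gf x t.
Proof. intros. unfold gf, Rpower. apply Rmult_lt_0_compat; apply exp_pos. Qed.

Lemma gf_hp x : forall t, 0 < t -> 0 <= gf x t.
Proof. intros; left; apply gf_pos; auto. Qed.
Lemma gf_hc x : forall t, 0 < t -> continuous (gf x) t.
Proof. intros; apply gf_cont; auto. Qed.

Lemma Rpower_le_1 t s : 0 < t <= 1 -> 0 <= s -> Rpower t s <= 1.
Proof.
  intros Ht Hs. unfold Rpower. rewrite <- exp_0. apply exp_le_mono.
  assert (ln t <= 0). { rewrite <- ln_1. destruct (Req_dec t 1). subst; lra.
    left. apply ln_increasing; lra. }
  nra.
Qed.

Lemma gf_le1 x t : 1 <= x -> 0 < t <= 1 -> gf x t <= 1.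
Proof.
  intros Hx Ht. unfold gf. assert (Rpower t (x-1) <= 1) by (apply Rpower_le_1; lra).
  assert (exp (-t) <= 1) by (rewrite <- exp_0; apply exp_le_mono; lra).
  assert (0 < Rpower t (x-1)) by (unfold Rpower; apply exp_pos).
  assert (0 < exp (-t)) by apply exp_pos. nra.
Qed.

Lemma pow_le_exp y m : 0 <= y -> y ^ m <= INR (fact m) * exp y.
Proof.
  intros Hy. pose proof (exp_ge_taylor y m Hy) as H.
  assert (y ^ m / INR (fact m) <= sum_f_R0 (fun k => y ^ k / INR (fact k)) m).
  { destruct m. simpl; lra. rewrite tech5.
    assert (0 <= sum_f_R0 (fun k => y ^ k / INR (fact k)) m).
    { apply cond_pos_sum. intros n. apply Rdiv_le_0_compat. apply pow_le; auto.
      apply lt_0_INR, lt_O_fact. }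
    lra. }
  assert (0 < INR (fact m)) by apply lt_0_INR, lt_O_fact.
  replace (y ^ m) with (INR (fact m) * (y ^ m / INR (fact m))) by (field; lra).
  apply Rmult_le_compat_l; lra.
Qed.

Definition Kt (m : nat) := INR (fact m) * 2 ^ m.

Lemma Kt_pos m : 0 < Kt m.
Proof. unfold Kt. apply Rmult_lt_0_compat. apply lt_0_INR, lt_O_fact. apply pow_lt; lra. Qed.

Lemma gf_tail x m t : 1 <= x -> x - 1 <= INR m -> 1 <= t -> gf x t <= Kt m * exp (- t / 2).
Proof.
  intros Hx Hm Ht. unfold gf, Kt.
  assert (H1 : Rpower t (x-1) <= t ^ m).
  { rewrite <- Rpower_pow by lra. apply Rle_Rpower; lra. }
  assert (H2 : t ^ m <= INR (fact m) * 2 ^ m * exp (t/2)).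
  { replace (t ^ m) with (2 ^ m * (t/2) ^ m) by (rewrite <- Rpow_mult_distr; f_equal; field).
    pose proof (pow_le_exp (t/2) m ltac:(lra)).
    assert (0 < 2 ^ m) by (apply pow_lt; lra). nra. }
  assert (exp (t/2) * exp (-t) = exp (- t / 2)) by (rewrite <- exp_plus; f_equal; field).
  assert (0 < exp (-t)) by apply exp_pos.
  apply Rle_trans with (t ^ m * exp (-t)). apply Rmult_le_compat_r; lra.
  apply Rle_trans with (INR (fact m) * 2 ^ m * exp (t/2) * exp (-t)). apply Rmult_le_compat_r; lra.
  rewrite Rmult_assoc, H. lra.
Qed.

Lemma int_exp_half b : 1 <= b -> RInt (fun t => exp (- t / 2)) 1 b <= 2.
Proof.
  intros Hb.
  assert (H : is_RInt (fun t => exp (- t / 2)) 1 b (minus ((fun t => -2 * exp (- t / 2)) b) ((fun t => -2 * exp (- t / 2)) 1))).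
  { apply (is_RInt_derive (V:=R_CompleteNormedModule) (fun t => -2 * exp (- t / 2)) (fun t => exp (- t / 2))).
    - intros t _. auto_derive; auto. lra.
    - intros t _. apply continuity_pt_filterlim.
      apply continuity_pt_comp with (f1 := fun t => - t / 2) (f2 := exp).
      apply derivable_continuous_pt. 
      apply derivable_pt_div. apply derivable_pt_opp, derivable_pt_id. apply derivable_pt_const.
      lra. apply derivable_continuous_pt, derivable_pt_exp. }
  rewrite (is_RInt_unique _ _ _ _ H). unfold minus, plus, opp; simpl.
  pose proof (exp_pos (-b/2)). pose proof (exp_pos (-(1)/2)).
  assert (exp (-(1)/2) <= 1) by (apply Rle_trans with (exp 0); [apply exp_le_mono; lra| rewrite exp_0; lra]). lra.
Qed.

Lemma GammaRep x : 1 <= x ->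
  exists Lb La,
    (forall b, 0 < b -> Fi (gf x) b <= Lb) /\
    (forall u, (forall b, 0 < b -> Fi (gf x) b <= u) -> Lb <= u) /\
    (forall a, 0 < a -> La <= Fi (gf x) a) /\
    (forall u, (forall a, 0 < a -> u <= Fi (gf x) a) -> u <= La) /\
    Gamma x = Lb - La.
Proof.
  intros Hx. unfold Gamma. change (fun t => Rpower t (x - 1) * exp (- t)) with (gf x).
  apply GL.
  - intros; apply gf_cont; auto.
  - intros; left; apply gf_pos; auto.
  - destruct (INR_unbounded (x - 1)) as [m Hm].
    exists (Kt m * 2). intros b Hb. unfold Fi.
    apply Rle_trans with (RInt (fun t => scal (Kt m) (exp (- t / 2))) 1 b).
    + apply RInt_le; auto.
      * apply exR. intros; apply gf_cont; auto. lra. lra.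
      * apply (ex_RInt_continuous (V:=R_CompleteNormedModule)). intros z _.
        apply continuity_pt_filterlim. apply continuity_pt_scal.
        apply continuity_pt_comp with (f1 := fun t => - t / 2) (f2 := exp).
        apply derivable_continuous_pt.
        apply derivable_pt_div. apply derivable_pt_opp, derivable_pt_id. apply derivable_pt_const.
        lra. apply derivable_continuous_pt, derivable_pt_exp.
      * intros t Ht. apply gf_tail; lra.
    + rewrite (RInt_scal (V:=R_CompleteNormedModule)). 
      * pose proof (int_exp_half b Hb). pose proof (Kt_pos m). unfold scal; simpl; unfold mult; simpl. nra.
      * apply (ex_RInt_continuous (V:=R_CompleteNormedModule)). intros z _.
        apply continuity_pt_filterlim. 
        apply continuity_pt_comp with (f1 := fun t => - t / 2) (f2 := exp).
        apply derivable_continuous_pt.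
        apply derivable_pt_div. apply derivable_pt_opp, derivable_pt_id. apply derivable_pt_const.
        lra. apply derivable_continuous_pt, derivable_pt_exp.
  - exists (-1). intros a Ha.
    assert (RInt (gf x) a 1 <= RInt (fun _ => 1) a 1).
    { apply RInt_le. lra. apply exR. intros; apply gf_cont; auto. lra. lra.
      apply ex_RInt_const. intros t Ht. apply gf_le1; lra. }
    rewrite (Fi_diff _ (gf_hc x)), Fi_1 in H by lra. rewrite RInt_const in H.
    unfold scal in H; simpl in H; unfold mult in H; simpl in H. lra.
Qed.

Lemma exRg x a b : 0 < a -> 0 < b -> ex_RInt (gf x) a b.
Proof. apply exR, gf_hc. Qed.

Lemma RInt_gf_ge0 x a b : 0 < a -> a <= b -> 0 <= RInt (gf x) a b.
Proof. intros. apply RInt_ge_0; auto. apply exRg; lra. intros; apply gf_hp; lra. Qed.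

Lemma gamma_ge x a b : 1 <= x -> 0 < a -> a <= b -> RInt (gf x) a b <= Gamma x.
Proof.
  intros Hx Ha Hab. destruct (GammaRep x Hx) as [Lb [La [P1 [P2 [P3 [P4 ->]]]]]].
  rewrite (Fi_diff _ (gf_hc x)) by lra. specialize (P1 b ltac:(lra)). specialize (P3 a Ha). lra.
Qed.

Lemma gamma_le x c A B : 1 <= x -> 0 < c ->
  (forall a, 0 < a < c -> RInt (gf x) a c <= A) ->
  (forall b, c < b -> RInt (gf x) c b <= B) -> Gamma x <= A + B.
Proof.
  intros Hx Hc HA HB. destruct (GammaRep x Hx) as [Lb [La [P1 [P2 [P3 [P4 ->]]]]]].
  assert (A0 : 0 <= A). { eapply Rle_trans; [|apply (HA (c/2)); lra]. apply RInt_gf_ge0; lra. }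
  assert (B0 : 0 <= B). { eapply Rle_trans; [|apply (HB (c+1)); lra]. apply RInt_gf_ge0; lra. }
  assert (Lb <= Fi (gf x) c + B).
  { apply P2. intros b Hb. destruct (Rle_dec b c).
    - assert (Fi (gf x) b <= Fi (gf x) c) by (apply (Fi_mono _ (gf_hc x) (gf_hp x)); lra). lra.
    - specialize (HB b ltac:(lra)). rewrite (Fi_diff _ (gf_hc x)) in HB by lra. lra. }
  assert (Fi (gf x) c - A <= La).
  { apply P4. intros a Ha. destruct (Rle_dec c a).
    - assert (Fi (gf x) c <= Fi (gf x) a) by (apply (Fi_mono _ (gf_hc x) (gf_hp x)); lra). lra.
    - specialize (HA a ltac:(lra)). rewrite (Fi_diff _ (gf_hc x)) in HA by lra. lra. }
  lra.
Qed.

Lemma ex_RInt_exph a b : ex_RInt (fun t => exp (- t / 2)) a b.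
Proof.
  apply (ex_RInt_continuous (V:=R_CompleteNormedModule)). intros z _.
  apply continuity_pt_filterlim.
  apply continuity_pt_comp with (f1 := fun t => - t / 2) (f2 := exp).
  apply derivable_continuous_pt.
  apply derivable_pt_div. apply derivable_pt_opp, derivable_pt_id. apply derivable_pt_const.
  lra. apply derivable_continuous_pt, derivable_pt_exp.
Qed.

Lemma tail_int x m b : 1 <= x -> x - 1 <= INR m -> 1 <= b -> RInt (gf x) 1 b <= 2 * Kt m.
Proof.
  intros Hx Hm Hb.
  apply Rle_trans with (RInt (fun t => scal (Kt m) (exp (- t / 2))) 1 b).
  - apply RInt_le; auto.
    + apply exRg; lra.
    + apply (ex_RInt_scal (V:=R_CompleteNormedModule)). apply ex_RInt_exph.
    + intros t Ht. apply gf_tail; lra.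
  - rewrite (RInt_scal (V:=R_CompleteNormedModule)) by apply ex_RInt_exph.
    pose proof (int_exp_half b Hb). pose proof (Kt_pos m). unfold scal; simpl; unfold mult; simpl. nra.
Qed.

Lemma head_int x a : 1 <= x -> 0 < a <= 1 -> RInt (gf x) a 1 <= 1.
Proof.
  intros Hx Ha.
  assert (RInt (gf x) a 1 <= RInt (fun _ => 1) a 1).
  { apply RInt_le. lra. apply exRg; lra. apply ex_RInt_const. intros t Ht. apply gf_le1; lra. }
  rewrite RInt_const in H. unfold scal in H; simpl in H; unfold mult in H; simpl in H. lra.
Qed.

Lemma G_upper x m : 1 <= x -> x - 1 <= INR m -> Gamma x <= 1 + 2 * Kt m.
Proof.
  intros Hx Hm. apply gamma_le with 1; try lra.
  - intros a Ha. apply head_int; lra.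
  - intros b Hb. apply tail_int; lra.
Qed.

Lemma G_lower x : 1 <= x -> exp (-2) <= Gamma x.
Proof.
  intros Hx. eapply Rle_trans; [|apply (gamma_ge x 1 2); lra].
  assert (RInt (fun _ => exp (-2)) 1 2 <= RInt (gf x) 1 2).
  { apply RInt_le. lra. apply ex_RInt_const. apply exRg; lra.
    intros t Ht. unfold gf.
    assert (1 <= Rpower t (x - 1)). { apply Rle_trans with (Rpower t 0); [rewrite Rpower_O; lra | apply Rle_Rpower; lra]. }
    assert (exp (-2) <= exp (-t)) by (apply exp_le_mono; lra).
    pose proof (exp_pos (-2)). nra. }
  rewrite RInt_const in H. unfold scal in H; simpl in H; unfold mult in H; simpl in H. lra.
Qed.

Lemma G_pos x : 1 <= x -> 0 < Gamma x.
Proof. intros. eapply Rlt_le_trans; [apply exp_pos|apply G_lower; auto]. Qed.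

Lemma G_split n al c : 0 < al < 1 -> 1 <= c ->
  Gamma (INR n + 2 - al) <= c ^ (S (S n)) + Rpower c (- al) * Gamma (INR n + 2).
Proof.
  intros Hal Hc. pose proof (pos_INR n).
  apply gamma_le with c; try lra.
  - intros a Ha.
    assert (RInt (gf (INR n + 2 - al)) a c <= RInt (fun _ => c ^ (S n)) a c).
    { apply RInt_le. lra. apply exRg; lra. apply ex_RInt_const.
      intros t Ht. unfold gf. replace (INR n + 2 - al - 1) with (INR n + 1 - al) by ring.
      assert (Rpower t (INR n + 1 - al) <= Rpower c (INR n + 1 - al)) by (apply Rle_Rpower_l; lra).
      assert (Rpower c (INR n + 1 - al) <= c ^ (S n)).
      { rewrite <- Rpower_pow by lra. apply Rle_Rpower; auto. rewrite S_INR; lra. }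
      assert (exp (-t) <= 1) by (apply Rle_trans with (exp 0); [apply exp_le_mono; lra| rewrite exp_0; lra]).
      assert (0 < Rpower t (INR n + 1 - al)) by (unfold Rpower; apply exp_pos).
      pose proof (exp_pos (-t)). nra. }
    rewrite RInt_const in H0. unfold scal in H0; simpl in H0; unfold mult in H0; simpl in H0.
    assert (0 < c ^ S n) by (apply pow_lt; lra).
    assert ((c - a) * c ^ S n <= c * c ^ S n) by (apply Rmult_le_compat_r; lra).
    simpl in *. lra.
  - intros b Hb.
    apply Rle_trans with (RInt (fun t => scal (Rpower c (- al)) (gf (INR n + 2) t)) c b).
    + apply RInt_le. lra. apply exRg; lra.
      apply (ex_RInt_scal (V:=R_CompleteNormedModule)). apply exRg; lra.
      intros t Ht. unfold scal; simpl; unfold mult; simpl. unfold gf.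
      replace (INR n + 2 - al - 1) with ((INR n + 1) + (- al)) by ring.
      replace (INR n + 2 - 1) with (INR n + 1) by ring.
      rewrite Rpower_plus.
      assert (Rpower t (- al) <= Rpower c (- al)).
      { rewrite !Rpower_Ropp. apply Rinv_le_contravar. unfold Rpower; apply exp_pos.
        apply Rle_Rpower_l; lra. }
      assert (0 < Rpower t (INR n + 1)) by (unfold Rpower; apply exp_pos).
      pose proof (exp_pos (-t)). 
      assert (0 < Rpower t (INR n + 1) * exp (-t)) by (apply Rmult_lt_0_compat; auto). nra.
    + rewrite (RInt_scal (V:=R_CompleteNormedModule)) by (apply exRg; lra).
      unfold scal; simpl; unfold mult; simpl.
      apply Rmult_le_compat_l. unfold Rpower; left; apply exp_pos.
      apply gamma_ge; lra.
Qed.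

Lemma G4 n : (1 <= n)%nat -> INR n ^ (S n) * exp (- (INR n + 1)) <= Gamma (INR n + 2).
Proof.
  intros Hn. assert (1 <= INR n) by (apply (le_INR 1); auto).
  eapply Rle_trans; [|apply (gamma_ge _ (INR n) (INR n + 1)); lra].
  assert (RInt (fun _ => INR n ^ (S n) * exp (- (INR n + 1))) (INR n) (INR n + 1)
          <= RInt (gf (INR n + 2)) (INR n) (INR n + 1)).
  { apply RInt_le. lra. apply ex_RInt_const. apply exRg; lra.
    intros t Ht. unfold gf. replace (INR n + 2 - 1) with (INR (S n)) by (rewrite S_INR; ring).
    rewrite Rpower_pow by lra.
    assert (INR n ^ (S n) <= t ^ (S n)) by (apply pow_incr; lra).
    assert (exp (- (INR n + 1)) <= exp (-t)) by (apply exp_le_mono; lra).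
    assert (0 < INR n ^ (S n)) by (apply pow_lt; lra).
    pose proof (exp_pos (- (INR n + 1))). nra. }
  set (K := INR n ^ S n * exp (- (INR n + 1))) in *.
  rewrite RInt_const in H0. unfold scal in H0; simpl in H0; unfold mult in H0; simpl in H0.
  replace (INR n + 1 - INR n) with 1 in H0 by ring. lra.
Qed.

Lemma G5 n al : 0 < al < 1 -> (INR n + 1) ^ n * exp (- (INR n + 2)) <= Gamma (INR n + 2 - al).
Proof.
  intros Hal. pose proof (pos_INR n).
  eapply Rle_trans; [|apply (gamma_ge _ (INR n + 1) (INR n + 2)); lra].
  assert (RInt (fun _ => (INR n + 1) ^ n * exp (- (INR n + 2))) (INR n + 1) (INR n + 2)
          <= RInt (gf (INR n + 2 - al)) (INR n + 1) (INR n + 2)).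
  { apply RInt_le. lra. apply ex_RInt_const. apply exRg; lra.
    intros t Ht. unfold gf.
    assert (t ^ n <= Rpower t (INR n + 2 - al - 1)).
    { rewrite <- Rpower_pow by lra. apply Rle_Rpower; lra. }
    assert ((INR n + 1) ^ n <= t ^ n) by (apply pow_incr; lra).
    assert (exp (- (INR n + 2)) <= exp (-t)) by (apply exp_le_mono; lra).
    assert (0 < (INR n + 1) ^ n) by (apply pow_lt; lra).
    pose proof (exp_pos (- (INR n + 2))). 
    assert ((INR n + 1) ^ n <= Rpower t (INR n + 2 - al - 1)) by lra.
    nra. }
  set (K := (INR n + 1) ^ n * exp (- (INR n + 2))) in *.
  rewrite RInt_const in H0. unfold scal in H0; simpl in H0; unfold mult in H0; simpl in H0.
  replace (INR n + 2 - (INR n + 1)) with 1 in H0 by ring. lra.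
Qed.

Lemma exp_nat m : exp (INR m) = exp 1 ^ m.
Proof.
  induction m. simpl. apply exp_0.
  rewrite S_INR, exp_plus, IHm. simpl. ring.
Qed.

Lemma ratio_bound al n c : 0 < al < 1 -> (1 <= n)%nat -> 1 <= c ->
  Gamma (INR n + 2 - al) / Gamma (INR n + 2) <= c * (c * exp 1 / INR n) ^ (S n) + Rpower c (- al).
Proof.
  intros Hal Hn Hc.
  assert (Hn' : 1 <= INR n) by (apply (le_INR 1); auto).
  pose proof (G_split n al c Hal Hc) as H1.
  pose proof (G4 n Hn) as H2.
  assert (HG : 0 < Gamma (INR n + 2)) by (apply G_pos; lra).
  set (L := INR n ^ S n * exp (- (INR n + 1))) in *.
  assert (HL : 0 < L) by (apply Rmult_lt_0_compat; [apply pow_lt; lra| apply exp_pos]).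
  assert (HcS : 0 < c ^ S (S n)) by (apply pow_lt; lra).
  assert (E1 : c ^ S (S n) / L = c * (c * exp 1 / INR n) ^ S n).
  { unfold L. rewrite exp_Ropp. replace (INR n + 1) with (INR (S n)) by (rewrite S_INR; ring).
    rewrite exp_nat. unfold Rdiv. rewrite !Rpow_mult_distr, pow_inv.
    change (c ^ S (S n)) with (c * c ^ S n).
    assert (0 < INR n ^ S n) by (apply pow_lt; lra).
    assert (0 < exp 1 ^ S n) by (apply pow_lt, exp_pos). field. lra. }
  assert (c ^ S (S n) / Gamma (INR n + 2) <= c ^ S (S n) / L).
  { unfold Rdiv. apply Rmult_le_compat_l. lra. apply Rinv_le_contravar; auto. }
  assert (0 <= Rpower c (- al)) by (unfold Rpower; left; apply exp_pos).
  apply Rle_trans with (c ^ S (S n) / Gamma (INR n + 2) + Rpower c (- al)).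
  - apply Rmult_le_reg_r with (Gamma (INR n + 2)); auto.
    unfold Rdiv. rewrite Rmult_plus_distr_r, !Rmult_assoc, Rinv_l, Rmult_1_r by lra. lra.
  - lra.
Qed.

Lemma ratio_small al eps : 0 < al < 1 -> 0 < eps ->
  exists N, forall n, (N <= n)%nat -> Gamma (INR n + 2 - al) / Gamma (INR n + 2) < eps.
Proof.
  intros Hal He.
  set (c := Rmax 1 (exp (ln (2 / eps) / al))).
  assert (Hc : 1 <= c) by apply Rmax_l.
  assert (Hc2 : Rpower c (- al) <= eps / 2).
  { unfold Rpower.
    assert (ln (2/eps) / al <= ln c).
    { rewrite <- (ln_exp (ln (2 / eps) / al)) at 1. apply ln_le. apply exp_pos. apply Rmax_r. }
    assert (- al * ln c <= - ln (2 / eps)).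
    { assert (ln (2/eps) <= al * ln c).
      { replace (ln (2/eps)) with (al * (ln (2/eps) / al)) by (field; lra).
        apply Rmult_le_compat_l; lra. }
      lra. }
    apply Rle_trans with (exp (- ln (2 / eps))). apply exp_le_mono; auto.
    rewrite exp_Ropp, exp_ln. right; field; lra. apply Rdiv_lt_0_compat; lra. }
  destruct (INR_unbounded (2 * c * exp 1)) as [N1 HN1].
  destruct (pow_lt_1_zero (/2) ltac:(rewrite Rabs_pos_eq; lra) (eps / (2 * c))) as [N2 HN2].
  { apply Rdiv_lt_0_compat; lra. }
  exists (S (N1 + N2)). intros n Hn.
  assert (Hn1 : (1 <= n)%nat) by lia.
  assert (HnN1 : INR N1 <= INR n) by (apply le_INR; lia).
  pose proof (ratio_bound al n c Hal Hn1 Hc) as HB.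
  assert (1 <= INR n) by (apply (le_INR 1); lia).
  assert (He1 : 0 < exp 1) by apply exp_pos.
  assert (Hq : 0 <= c * exp 1 / INR n <= / 2).
  { split. apply Rdiv_le_0_compat. nra. lra.
    apply Rmult_le_reg_r with (INR n). lra. unfold Rdiv. rewrite Rmult_assoc, Rinv_l, Rmult_1_r by lra. lra. }
  assert ((c * exp 1 / INR n) ^ S n <= (/2) ^ S n) by (apply pow_incr; lra).
  specialize (HN2 (S n) ltac:(lia)). rewrite Rabs_pos_eq in HN2 by (apply pow_le; lra).
  assert (c * (/ 2) ^ S n < eps / 2).
  { apply Rmult_lt_reg_l with (/ c). apply Rinv_0_lt_compat; lra.
    rewrite <- Rmult_assoc, Rinv_l, Rmult_1_l by lra.
    replace (/ c * (eps / 2)) with (eps / (2 * c)) by (field; lra). auto. }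
  assert (c * (c * exp 1 / INR n) ^ S n <= c * (/ 2) ^ S n) by (apply Rmult_le_compat_l; lra).
  lra.
Qed.

Lemma fact_le_pow m : INR (fact m) <= INR m ^ m.
Proof.
  induction m. simpl; lra.
  change (fact (S m)) with (S m * fact m)%nat. rewrite mult_INR.
  change (INR (S m) ^ S m) with (INR (S m) * INR (S m) ^ m).
  pose proof (pos_INR m). pose proof (lt_0_INR (S m) ltac:(lia)).
  assert (INR m ^ m <= INR (S m) ^ m) by (apply pow_incr; rewrite S_INR; lra).
  apply Rmult_le_compat_l; lra.
Qed.

Lemma Sn_le_pow2 n : INR (S n) <= 2 ^ n.
Proof.
  induction n. simpl; lra. rewrite S_INR. change (2 ^ S n) with (2 * 2 ^ n). rewrite S_INR in IHn.
  rewrite S_INR. pose proof (pos_INR n). assert (1 <= 2 ^ n) by (apply pow_R1_Rle; lra). lra.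
Qed.

Section Ecoefs.
Variable alpha : R.
Hypothesis Hal : 0 < alpha < 1.

Definition gg (n : nat) := Gamma (2 - alpha) * (Gamma (INR n + 2) / Gamma (INR n + 2 - alpha)).

Lemma G0_pos : 0 < Gamma (2 - alpha).
Proof. apply G_pos; lra. Qed.
Lemma Gn2_pos n : 0 < Gamma (INR n + 2).
Proof. apply G_pos; pose proof (pos_INR n); lra. Qed.
Lemma Gn2a_pos n : 0 < Gamma (INR n + 2 - alpha).
Proof. apply G_pos; pose proof (pos_INR n); lra. Qed.

Lemma gg_pos n : 0 < gg n.
Proof.
  unfold gg. pose proof G0_pos. pose proof (Gn2_pos n). pose proof (Gn2a_pos n).
  apply Rmult_lt_0_compat; auto. apply Rdiv_lt_0_compat; auto.
Qed.

Lemma Ecoef_S n : Ecoef alpha (S n) = Ecoef alpha n / gg n.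
Proof.
  change (Ecoef alpha (S n)) with (Ecoef alpha n / (Gamma (2 - alpha) * (Gamma (INR (S n) + 1) / Gamma (INR (S n) + 1 - alpha)))).
  unfold gg. replace (INR (S n) + 1) with (INR n + 2) by (rewrite S_INR; ring). reflexivity.
Qed.

Lemma Ecoef_pos n : 0 < Ecoef alpha n.
Proof.
  induction n. simpl; lra. rewrite Ecoef_S. apply Rdiv_lt_0_compat; auto. apply gg_pos.
Qed.

Lemma LDfac_eq n : Gamma (INR n + 2) * Gamma (2 - alpha) / Gamma (INR n + 2 - alpha) = gg n.
Proof. unfold gg. pose proof (Gn2a_pos n). field. lra. Qed.

Lemma Ecoef_S_gg n : Ecoef alpha (S n) * gg n = Ecoef alpha n.
Proof. rewrite Ecoef_S. pose proof (gg_pos n). field. lra. Qed.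

Lemma inv_gg_lim : is_lim_seq (fun n => / gg n) 0.
Proof.
  apply is_lim_seq_Reals. intros eps He.
  pose proof G0_pos as HG0.
  destruct (ratio_small alpha (eps * Gamma (2 - alpha)) Hal ltac:(nra)) as [N HN].
  exists N. intros n Hn. unfold R_dist. rewrite Rminus_0_r.
  pose proof (gg_pos n). rewrite Rabs_pos_eq by (left; apply Rinv_0_lt_compat; auto).
  specialize (HN n Hn).
  assert (/ gg n = Gamma (INR n + 2 - alpha) / Gamma (INR n + 2) / Gamma (2 - alpha)).
  { unfold gg. pose proof (Gn2_pos n). pose proof (Gn2a_pos n). field. lra. }
  rewrite H0. apply Rmult_lt_reg_r with (Gamma (2 - alpha)); auto.
  unfold Rdiv at 1. rewrite Rmult_assoc, Rinv_l, Rmult_1_r by lra. lra.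
Qed.

Definition Kg := 6 * Gamma (2 - alpha) * exp 2.
Definition Qg := 4 * exp 1.

Lemma gg_bound n : gg n <= Kg * Qg ^ n.
Proof.
  pose proof G0_pos as HG0. pose proof (pos_INR n) as Hn.
  unfold gg, Kg, Qg.
  assert (Hup : Gamma (INR n + 2) <= 6 * (INR (S n) * INR (S n) ^ n * 2 ^ n)).
  { eapply Rle_trans. apply (G_upper _ (S n)). lra. rewrite S_INR; lra.
    unfold Kt. pose proof (fact_le_pow (S n)) as F1.
    change (INR (S n) ^ S n) with (INR (S n) * INR (S n) ^ n) in F1.
    change (2 ^ S n) with (2 * 2 ^ n).
    assert (1 <= INR (S n)) by (rewrite S_INR; lra).
    assert (1 <= INR (S n) ^ n) by (apply pow_R1_Rle; lra).
    assert (1 <= 2 ^ n) by (apply pow_R1_Rle; lra).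
    set (X := INR (S n) * INR (S n) ^ n) in *.
    assert (1 <= X) by (unfold X; nra).
    assert (INR (fact (S n)) * (2 * 2 ^ n) <= X * (2 * 2 ^ n)) by (apply Rmult_le_compat_r; lra).
    assert (1 <= X * 2 ^ n) by nra.
    lra. }
  assert (Hlow : (INR n + 1) ^ n * exp (- (INR n + 2)) <= Gamma (INR n + 2 - alpha)) by (apply G5; auto).
  assert (Hpos1 : 0 < (INR n + 1) ^ n) by (apply pow_lt; lra).
  assert (Hex : exp (- (INR n + 2)) = / (exp 2 * exp 1 ^ n)).
  { rewrite exp_Ropp. f_equal. rewrite <- exp_nat, <- exp_plus. f_equal; ring. }
  pose proof (Gn2a_pos n). pose proof (Gn2_pos n).
  assert (Gamma (INR n + 2) / Gamma (INR n + 2 - alpha) <= 6 * exp 2 * (INR (S n) * (2 * exp 1) ^ n)).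
  { apply Rle_trans with (Gamma (INR n + 2) / ((INR n + 1) ^ n * exp (- (INR n + 2)))).
    - unfold Rdiv. apply Rmult_le_compat_l. lra. apply Rinv_le_contravar; auto.
      apply Rmult_lt_0_compat; auto. apply exp_pos.
    - rewrite Hex. replace (INR n + 1) with (INR (S n)) by (rewrite S_INR; ring).
      rewrite Rpow_mult_distr.
      pose proof (exp_pos 2). pose proof (pow_lt (exp 1) n (exp_pos 1)).
      assert (HS : 0 < INR (S n)) by (apply lt_0_INR; lia).
      pose proof (pow_lt (INR (S n)) n HS).
      replace (Gamma (INR n + 2) / (INR (S n) ^ n * / (exp 2 * exp 1 ^ n)))
        with (Gamma (INR n + 2) * exp 2 * exp 1 ^ n / INR (S n) ^ n) by (field; lra).
      apply Rmult_le_reg_r with (INR (S n) ^ n); auto.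
      unfold Rdiv. rewrite Rmult_assoc, Rinv_l, Rmult_1_r by lra.
      assert (0 < exp 2 * exp 1 ^ n) by (apply Rmult_lt_0_compat; auto).
      apply Rle_trans with (6 * (INR (S n) * INR (S n) ^ n * 2 ^ n) * (exp 2 * exp 1 ^ n)).
      + rewrite Rmult_assoc. apply Rmult_le_compat_r; lra.
      + right; ring. }
  assert (INR (S n) * (2 * exp 1) ^ n <= (4 * exp 1) ^ n).
  { assert (E4 : (4 * exp 1) ^ n = 2 ^ n * (2 * exp 1) ^ n)
      by (rewrite <- Rpow_mult_distr; f_equal; ring). rewrite E4.
    apply Rmult_le_compat_r. apply pow_le. pose proof (exp_pos 1); lra. apply Sn_le_pow2. }
  assert (0 < exp 2) by apply exp_pos.
  apply Rle_trans with (Gamma (2 - alpha) * (6 * exp 2 * (INR (S n) * (2 * exp 1) ^ n))).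
  apply Rmult_le_compat_l; lra.
  apply Rle_trans with (Gamma (2 - alpha) * (6 * exp 2 * (4 * exp 1) ^ n)).
  apply Rmult_le_compat_l. lra. apply Rmult_le_compat_l; lra.
  right; ring.
Qed.

End Ecoefs.

Fixpoint ff (n k : nat) : nat :=
  match k, n with
  | O, _ => 1%nat
  | S _, O => 0%nat
  | S k', S n' => (S n' * ff n' k')%nat
  end.

Lemma ff_0 n : ff n 0 = 1%nat.
Proof. destruct n; reflexivity. Qed.

Lemma ff_zero n k : (n < k)%nat -> ff n k = 0%nat.
Proof.
  revert k. induction n; intros k Hk; destruct k; try lia; simpl; auto.
  rewrite IHn by lia. lia.
Qed.

Lemma ff_S n k : ff (S n) (S k) = (ff n (S k) + S k * ff n k)%nat.
Proof.
  revert k. induction n; intros k.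
  - destruct k; simpl; lia.
  - destruct k.
    + rewrite !ff_0. change (ff (S (S n)) 1) with (S (S n) * ff (S n) 0)%nat.
      change (ff (S n) 1) with (S n * ff n 0)%nat. rewrite !ff_0. lia.
    + change (ff (S (S n)) (S (S k))) with (S (S n) * ff (S n) (S k))%nat.
      change (ff (S n) (S (S k))) with (S n * ff n (S k))%nat.
      change (ff (S n) (S k)) with (S n * ff n k)%nat.
      specialize (IHn k). change (ff (S n) (S k)) with (S n * ff n k)%nat in IHn.
      nia.
Qed.

Lemma ff_fact n k : fact (k + n) = (ff (k + n) k * fact n)%nat.
Proof.
  induction k. simpl. rewrite ff_0. lia.
  change (S k + n)%nat with (S (k + n)). simpl (ff (S (k+n)) (S k)).
  change (fact (S (k + n))) with (S (k + n) * fact (k + n))%nat. rewrite IHk. lia.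
Qed.

Lemma CeqD (a b : CC) : {a = b} + {a <> b}.
Proof.
  destruct a as [a1 a2], b as [b1 b2].
  destruct (Req_EM_T a1 b1) as [->|H1]; [|right; intros H; inversion H; auto].
  destruct (Req_EM_T a2 b2) as [->|H2]; [left; auto|right; intros H; inversion H; auto].
Qed.

Section Alg.
Variable alpha : R.
Hypothesis Hal : 0 < alpha < 1.

Definition Bf (k : nat) (lam : CC) : nat -> CC :=
  fun n => (RtoC (Ecoef alpha n * INR (ff n k)) * lam ^ (n - k))%C.

Lemma LDsub_eq lam u n :
  LDsub alpha lam u n = (u (S n) * RtoC (gg alpha n) - lam * u n)%C.
Proof. unfold LDsub, LD. rewrite LDfac_eq by auto. reflexivity. Qed.

Lemma gg_C_nz n : RtoC (gg alpha n) <> 0%C.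
Proof. intros H. apply RtoC_inj in H. pose proof (gg_pos alpha Hal n). lra. Qed.

Lemma Bf_S_gg k lam n :
  (Bf k lam (S n) * RtoC (gg alpha n))%C = (RtoC (Ecoef alpha n * INR (ff (S n) k)) * lam ^ (S n - k))%C.
Proof.
  unfold Bf. rewrite <- (Ecoef_S_gg alpha Hal n).
  rewrite !RtoC_mult. ring.
Qed.

Lemma LDsub_Bf lam0 k lam n :
  LDsub alpha lam0 (Bf k lam) n = ((lam - lam0) * Bf k lam n + RtoC (INR k) * Bf (pred k) lam n)%C.
Proof.
  rewrite LDsub_eq, Bf_S_gg. unfold Bf.
  destruct k as [|k].
  - rewrite !ff_0. simpl (INR 0). simpl (S n - 0)%nat. rewrite !Nat.sub_0_r. simpl Cpow. 
    rewrite !RtoC_mult. ring.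
  - simpl pred. rewrite ff_S. simpl (S n - S k)%nat. rewrite plus_INR, mult_INR.
    destruct (Nat.lt_ge_cases n (S k)) as [Hlt|Hge].
    + rewrite (ff_zero n (S k) Hlt). rewrite !RtoC_mult, !RtoC_plus, !RtoC_mult. simpl (INR 0). ring.
    + replace (n - k)%nat with (S (n - S k)) by lia. simpl Cpow.
      rewrite !RtoC_mult, !RtoC_plus, !RtoC_mult. ring.
Qed.

Lemma LDsub_add lam u v n :
  LDsub alpha lam (fun m => u m + v m)%C n = (LDsub alpha lam u n + LDsub alpha lam v n)%C.
Proof. rewrite !LDsub_eq. ring. Qed.

Lemma LDsub_scal lam c u n :
  LDsub alpha lam (fun m => c * u m)%C n = (c * LDsub alpha lam u n)%C.
Proof. rewrite !LDsub_eq. ring. Qed.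

Lemma LDsub_zero lam n : LDsub alpha lam (fun _ => 0%C) n = 0%C.
Proof. rewrite LDsub_eq. ring. Qed.

Lemma kernel lam z : (forall n, LDsub alpha lam z n = 0%C) -> forall n, z n = (z 0%nat * Bf 0 lam n)%C.
Proof.
  intros H n. induction n.
  - unfold Bf. rewrite ff_0. simpl. rewrite Rmult_1_r. simpl (Ecoef alpha 0). ring.
  - specialize (H n). rewrite LDsub_eq in H.
    pose proof (gg_C_nz n) as Hg.
    assert (E : z (S n) = (lam * z n / RtoC (gg alpha n))%C).
    { apply Ceq_minus in H.
      replace (z (S n)) with (z (S n) * RtoC (gg alpha n) / RtoC (gg alpha n))%C by (field; auto).
      rewrite H. reflexivity. }
    rewrite E, IHn. unfold Bf. rewrite !ff_0, !Nat.sub_0_r. simpl (INR 1).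
    rewrite !Rmult_1_r. rewrite Ecoef_S by auto. rewrite RtoC_div by (pose proof (gg_pos alpha Hal n); lra).
    simpl Cpow. field. auto.
Qed.

Inductive InSpan (N : CC -> nat) : (nat -> CC) -> Prop :=
| isp0 : InSpan N (fun _ => 0%C)
| ispB : forall k lam, (k < N lam)%nat -> InSpan N (Bf k lam)
| ispAdd : forall u v, InSpan N u -> InSpan N v -> InSpan N (fun n => u n + v n)%C
| ispScal : forall c u, InSpan N u -> InSpan N (fun n => c * u n)%C.

Lemma InSpan_mono N N' u : (forall v, (N v <= N' v)%nat) -> InSpan N u -> InSpan N' u.
Proof.
  intros HN H. induction H.
  - apply isp0.
  - apply ispB. specialize (HN lam). lia.
  - apply ispAdd; auto.
  - apply ispScal; auto.
Qed.

Lemma InSpan_ext N u v : InSpan N u -> (forall n, u n = v n) -> InSpan N v.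
Proof.
  intros H E. replace v with u; auto. apply functional_extensionality; auto.
Qed.

Definition upd (N : CC -> nat) (lam : CC) (m : nat) : CC -> nat :=
  fun v => if CeqD v lam then (N v + m)%nat else N v.

Lemma part_nonres N lam v : v <> lam ->
  forall k, (k < N v)%nat -> exists w, InSpan (upd N lam 1) w /\ forall n, LDsub alpha lam w n = Bf k v n.
Proof.
  intros Hv. assert (Hd : (v - lam)%C <> 0%C) by (apply Cminus_eq_contra; auto).
  assert (HN : upd N lam 1 v = N v) by (unfold upd; destruct (CeqD v lam); [contradiction|auto]).
  induction k; intros Hk.
  - exists (fun n => / (v - lam) * Bf 0 v n)%C. split.
    + apply ispScal, ispB. lia.
    + intros n. rewrite LDsub_scal, LDsub_Bf. simpl (INR 0). field. auto.
  - destruct (IHk ltac:(lia)) as [w [Hw Hw']].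
    exists (fun n => / (v - lam) * (Bf (S k) v n + (- RtoC (INR (S k))) * w n))%C. split.
    + apply ispScal, ispAdd. apply ispB; lia. apply ispScal; auto.
    + intros n. rewrite LDsub_scal, LDsub_add, LDsub_scal, LDsub_Bf, Hw'. simpl pred. field. auto.
Qed.

Lemma part_sol N lam y : InSpan N y ->
  exists w, InSpan (upd N lam 1) w /\ forall n, LDsub alpha lam w n = y n.
Proof.
  intros H. induction H.
  - exists (fun _ => 0%C). split. apply isp0. intros; apply LDsub_zero.
  - destruct (CeqD lam0 lam) as [->|Hne].
    + assert (Hc : RtoC (INR (S k)) <> 0%C).
      { intros E. apply RtoC_inj in E. pose proof (lt_0_INR (S k) ltac:(lia)). lra. }
      exists (fun n => / RtoC (INR (S k)) * Bf (S k) lam n)%C. split.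
      * apply ispScal, ispB. unfold upd. destruct (CeqD lam lam); [lia|congruence].
      * intros n. rewrite LDsub_scal, LDsub_Bf. simpl pred. field. auto.
    + apply part_nonres; auto.
  - destruct IHInSpan1 as [w1 [H1 E1]], IHInSpan2 as [w2 [H2 E2]].
    exists (fun n => w1 n + w2 n)%C. split. apply ispAdd; auto.
    intros n. rewrite LDsub_add, E1, E2. auto.
  - destruct IHInSpan as [w [H1 E1]].
    exists (fun n => c * w n)%C. split. apply ispScal; auto.
    intros n. rewrite LDsub_scal, E1. auto.
Qed.

Lemma step N lam u : InSpan N (LDsub alpha lam u) -> InSpan (upd N lam 1) u.
Proof.
  intros H. destruct (part_sol N lam _ H) as [w [Hw Ew]].
  set (z := fun n => (u n - w n)%C).
  assert (Hz : forall n, LDsub alpha lam z n = 0%C).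
  { intros n. unfold z. rewrite !LDsub_eq. specialize (Ew n). rewrite !LDsub_eq in Ew.
    replace ((u (S n) - w (S n)) * RtoC (gg alpha n) - lam * (u n - w n))%C
      with ((u (S n) * RtoC (gg alpha n) - lam * u n) - (w (S n) * RtoC (gg alpha n) - lam * w n))%C by ring.
    rewrite Ew. ring. }
  pose proof (kernel lam z Hz) as K.
  apply InSpan_ext with (fun n => w n + z 0%nat * Bf 0 lam n)%C.
  - apply ispAdd; auto. apply ispScal, ispB. unfold upd. destruct (CeqD lam lam); [lia|congruence].
  - intros n. rewrite <- K. unfold z. ring.
Qed.

Lemma iter_span m : forall N lam u, InSpan N (Nat.iter m (LDsub alpha lam) u) -> InSpan (upd N lam m) u.
Proof.
  induction m; intros N lam u H.
  - simpl in H. eapply InSpan_mono; [|exact H]. intros v; unfold upd; destruct (CeqD v lam); lia.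
  - simpl in H. apply step in H. apply IHm in H. eapply InSpan_mono; [|exact H].
    intros v; unfold upd; destruct (CeqD v lam); lia.
Qed.

Definition cnt (lamf : nat -> CC) (mult : nat -> nat) (L : list nat) (v : CC) : nat :=
  fold_right (fun l acc => ((if CeqD v (lamf l) then mult l else 0) + acc)%nat) 0%nat L.

Lemma fold_span lamf mult x L : forall N,
  InSpan N (fold_right (fun l acc => Nat.iter (mult l) (LDsub alpha (lamf l)) acc) x L) ->
  InSpan (fun v => (N v + cnt lamf mult L v)%nat) x.
Proof.
  induction L as [|l L IH]; intros N H.
  - simpl in H. eapply InSpan_mono; [|exact H]. intros v; simpl; lia.
  - simpl in H. apply iter_span in H. apply IH in H. eapply InSpan_mono; [|exact H].
    intros v. unfold upd, cnt; simpl. destruct (CeqD v (lamf l)); lia.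
Qed.

End Alg.

Lemma im_le_Cmod' z : Rabs (Im z) <= Cmod z.
Proof.
  pose proof (Cmod2_alt z). pose proof (Cmod_ge_0 z).
  apply Rsqr_incr_0_var. unfold Rsqr. rewrite <- Rabs_mult, Rabs_pos_eq by nra. nra. auto.
Qed.

Lemma re_le_Cmod' z : Rabs (Re z) <= Cmod z.
Proof.
  pose proof (Cmod2_alt z). pose proof (Cmod_ge_0 z).
  apply Rsqr_incr_0_var. unfold Rsqr. rewrite <- Rabs_mult, Rabs_pos_eq by nra. nra. auto.
Qed.

Lemma Cmod_le_ReIm z : Cmod z <= Rabs (Re z) + Rabs (Im z).
Proof.
  pose proof (Cmod2_alt z). pose proof (Cmod_ge_0 z).
  pose proof (Rabs_pos (Re z)). pose proof (Rabs_pos (Im z)).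
  assert (Re z ^ 2 = Rabs (Re z) ^ 2) by (simpl; rewrite !Rmult_1_r, <- Rabs_mult, Rabs_pos_eq; nra).
  assert (Im z ^ 2 = Rabs (Im z) ^ 2) by (simpl; rewrite !Rmult_1_r, <- Rabs_mult, Rabs_pos_eq; nra).
  nra.
Qed.

Definition Ent (a : nat -> CC) := forall R, 0 <= R -> ex_series (fun n => Cmod (a n) * R ^ n).

Lemma ex_series_nonneg_le (a b : nat -> R) : (forall n, 0 <= a n <= b n) -> ex_series b -> ex_series a.
Proof.
  intros H Hb. apply (ex_series_le a b); auto. intros n. unfold norm; simpl. unfold abs; simpl.
  rewrite Rabs_pos_eq; apply H.
Qed.

Lemma Ent_ext a b : Ent a -> (forall n, a n = b n) -> Ent b.
Proof. intros H E R HR. apply (ex_series_ext (fun n => Cmod (a n) * R ^ n)); [intros; rewrite E; auto|apply H; auto]. Qed.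

Lemma Ent_add a b : Ent a -> Ent b -> Ent (fun n => a n + b n)%C.
Proof.
  intros Ha Hb R HR. apply ex_series_nonneg_le with (fun n => Cmod (a n) * R ^ n + Cmod (b n) * R ^ n).
  - intros n. pose proof (pow_le R n HR). split. apply Rmult_le_pos; auto. apply Cmod_ge_0.
    pose proof (Cmod_triangle (a n) (b n)). nra.
  - apply (ex_series_plus (V:=R_NormedModule)); auto.
Qed.

Lemma Ent_scal c a : Ent a -> Ent (fun n => c * a n)%C.
Proof.
  intros Ha R HR. apply (ex_series_ext (fun n => scal (Cmod c) (Cmod (a n) * R ^ n))).
  - intros n. rewrite Cmod_mult. unfold scal; simpl; unfold mult; simpl. ring.
  - apply (ex_series_scal (V:=R_NormedModule)); auto.
Qed.

Lemma ex_series_0 : ex_series (fun _ : nat => 0).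
Proof.
  apply (ex_series_ext (fun n => scal 0 ((/2) ^ n))).
  - intros n. unfold scal; simpl; unfold mult; simpl. ring.
  - apply (ex_series_scal (V:=R_NormedModule)). apply ex_series_geom. rewrite Rabs_pos_eq; lra.
Qed.

Lemma Series_0' : Series (fun _ : nat => 0) = 0.
Proof.
  rewrite (Series_ext _ (fun n => 0 * (/2) ^ n)) by (intros; ring).
  rewrite Series_scal_l. ring.
Qed.

Lemma Ent_zero : Ent (fun _ => 0%C).
Proof.
  intros R HR. apply (ex_series_ext (fun _ => 0)); [intros n; rewrite Cmod_0, Rmult_0_l; reflexivity|apply ex_series_0].
Qed.

Lemma ff_le_pow n k : (ff n k <= n ^ k)%nat.
Proof.
  revert k. induction n; intros k; destruct k; simpl; try lia.
  specialize (IHn k). pose proof (Nat.pow_le_mono_l n (S n) k ltac:(lia)). nia.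
Qed.

Lemma ff_le_exp n k : INR (ff n k) <= INR (fact k) * exp 1 ^ n.
Proof.
  apply Rle_trans with (INR n ^ k). rewrite <- pow_INR. apply le_INR, ff_le_pow.
  rewrite <- exp_nat. apply pow_le_exp, pos_INR.
Qed.

Section Ents.
Variable alpha : R.
Hypothesis Hal : 0 < alpha < 1.

Lemma ex_eM M : 0 < M -> ex_series (fun n => Ecoef alpha n * M ^ n).
Proof.
  intros HM.
  assert (Hpos : forall n, 0 < Ecoef alpha n * M ^ n).
  { intros n. apply Rmult_lt_0_compat. apply Ecoef_pos; auto. apply pow_lt; auto. }
  apply (ex_series_ext (fun n => Rabs (Ecoef alpha n * M ^ n))).
  { intros n. rewrite Rabs_pos_eq; auto. left; auto. }
  apply (ex_series_DAlembert _ 0). lra.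
  - intros n. specialize (Hpos n). lra.
  - apply is_lim_seq_ext with (fun n => M * / gg alpha n).
    + intros n. rewrite Ecoef_S by auto. pose proof (gg_pos alpha Hal n).
      pose proof (Ecoef_pos alpha Hal n). pose proof (pow_lt M n HM).
      rewrite Rabs_pos_eq. simpl. field. repeat split; lra.
      simpl. apply Rlt_le. apply Rdiv_lt_0_compat.
      apply Rmult_lt_0_compat. apply Rdiv_lt_0_compat; auto. apply Rmult_lt_0_compat; auto.
      apply Rmult_lt_0_compat; auto.
    + replace (Finite 0) with (Rbar_mult M 0) by (simpl; f_equal; ring).
      apply is_lim_seq_scal_l. apply inv_gg_lim; auto.
Qed.

Lemma Ent_Bf k lam : Ent (Bf alpha k lam).
Proof.
  intros R HR.
  set (M := exp 1 * (Cmod lam + 1) * (R + 1)).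
  assert (HM : 0 < M) by (unfold M; pose proof (exp_pos 1); pose proof (Cmod_ge_0 lam); 
    apply Rmult_lt_0_compat; [apply Rmult_lt_0_compat|]; lra).
  apply ex_series_nonneg_le with (fun n => scal (INR (fact k)) (Ecoef alpha n * M ^ n)).
  - intros n. pose proof (pow_le R n HR). split. apply Rmult_le_pos; auto. apply Cmod_ge_0.
    unfold scal; simpl; unfold mult; simpl.
    unfold Bf. rewrite Cmod_mult, Cmod_pow, Cmod_R.
    pose proof (Ecoef_pos alpha Hal n) as He. pose proof (pos_INR (ff n k)).
    rewrite Rabs_pos_eq by (apply Rmult_le_pos; lra).
    pose proof (Cmod_ge_0 lam) as Hl.
    assert (H1a : Cmod lam ^ (n - k) <= (Cmod lam + 1) ^ n).
    { apply Rle_trans with ((Cmod lam + 1) ^ (n - k)). apply pow_incr; lra.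
      apply Rle_pow; [lra|lia]. }
    assert (H2a : R ^ n <= (R + 1) ^ n) by (apply pow_incr; lra).
    pose proof (ff_le_exp n k) as H3a.
    unfold M. rewrite !Rpow_mult_distr.
    pose proof (pow_le (Cmod lam) (n - k) Hl).
    pose proof (pow_lt (exp 1) n (exp_pos 1)).
    assert (0 <= INR (ff n k) * Cmod lam ^ (n - k)) by (apply Rmult_le_pos; lra).
    assert (INR (ff n k) * Cmod lam ^ (n - k) <= INR (fact k) * exp 1 ^ n * (Cmod lam + 1) ^ n).
    { apply Rmult_le_compat; auto. }
    assert (INR (ff n k) * Cmod lam ^ (n - k) * R ^ n <= INR (fact k) * exp 1 ^ n * (Cmod lam + 1) ^ n * (R + 1) ^ n).
    { apply Rmult_le_compat; auto. }
    replace (Ecoef alpha n * INR (ff n k) * Cmod lam ^ (n - k) * R ^ n)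
      with (Ecoef alpha n * (INR (ff n k) * Cmod lam ^ (n - k) * R ^ n)) by ring.
    replace (INR (fact k) * (Ecoef alpha n * (exp 1 ^ n * (Cmod lam + 1) ^ n * (R + 1) ^ n)))
      with (Ecoef alpha n * (INR (fact k) * exp 1 ^ n * (Cmod lam + 1) ^ n * (R + 1) ^ n)) by ring.
    apply Rmult_le_compat_l; lra.
  - apply (ex_series_scal (V:=R_NormedModule)). apply ex_eM; auto.
Qed.

Lemma Ent_LD a : Ent a -> Ent (LD alpha a).
Proof.
  intros Ha R HR.
  set (R' := Qg * R + 1).
  assert (HQ : 0 < Qg) by (unfold Qg; pose proof (exp_pos 1); lra).
  assert (HR' : 1 <= R') by (unfold R'; nra).
  assert (HK : 0 <= Kg alpha) by (unfold Kg; pose proof (G0_pos alpha Hal); pose proof (exp_pos 2); nra).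
  apply ex_series_nonneg_le with (fun n => scal (Kg alpha) (Cmod (a (S n)) * R' ^ (S n))).
  - intros n. pose proof (pow_le R n HR). split. apply Rmult_le_pos; auto. apply Cmod_ge_0.
    unfold scal; simpl; unfold mult; simpl.
    unfold LD. rewrite LDfac_eq by auto. rewrite Cmod_mult, Cmod_R.
    pose proof (gg_pos alpha Hal n). rewrite Rabs_pos_eq by lra.
    pose proof (gg_bound alpha Hal n) as Hgb. pose proof (Cmod_ge_0 (a (S n))) as Hca.
    assert (HQR : (Qg * R) ^ n <= R' ^ S n).
    { apply Rle_trans with (R' ^ n). apply pow_incr; unfold R'; nra.
      simpl. pose proof (pow_le R' n ltac:(lra)). nra. }
    rewrite Rpow_mult_distr in HQR.
    assert (H3 : gg alpha n * R ^ n <= Kg alpha * (Qg ^ n * R ^ n)).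
    { apply Rle_trans with (Kg alpha * Qg ^ n * R ^ n). apply Rmult_le_compat_r; auto. right; ring. }
    assert (gg alpha n * R ^ n <= Kg alpha * R' ^ S n).
    { eapply Rle_trans; [exact H3|]. apply Rmult_le_compat_l; auto. }
    assert (Hm : Cmod (a (S n)) * (gg alpha n * R ^ n) <= Cmod (a (S n)) * (Kg alpha * R' ^ S n))
      by (apply Rmult_le_compat_l; auto).
    eapply Rle_trans; [|eapply Rle_trans; [exact Hm|right]]; [right; ring| simpl; ring].
  - apply (ex_series_scal (V:=R_NormedModule)).
    apply (ex_series_incr_1 (fun n => Cmod (a n) * R' ^ n)). apply Ha. lra.
Qed.

Lemma Ent_LDsub lam a : Ent a -> Ent (LDsub alpha lam a).
Proof.
  intros Ha. apply Ent_ext with (fun n => LD alpha a n + (- lam) * a n)%C.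
  apply Ent_add. apply Ent_LD; auto. apply Ent_scal; auto.
  intros n. unfold LDsub. ring.
Qed.

Lemma Ent_iter m lam a : Ent a -> Ent (Nat.iter m (LDsub alpha lam) a).
Proof. induction m; simpl; auto. intros; apply Ent_LDsub; auto. Qed.

Lemma Ent_fold (lamf : nat -> CC) (mult : nat -> nat) a (L : list nat) : Ent a ->
  Ent (fold_right (fun l acc => Nat.iter (mult l) (LDsub alpha (lamf l)) acc) a L).
Proof. intros Ha. induction L; simpl; auto. apply Ent_iter; auto. Qed.

Lemma Ent_InSpan N u : InSpan alpha N u -> Ent u.
Proof.
  intros H. induction H. apply Ent_zero. apply Ent_Bf. apply Ent_add; auto. apply Ent_scal; auto.
Qed.

End Ents.

Lemma Cpow_add (z : CC) m n : (z ^ (m + n) = z ^ m * z ^ n)%C.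
Proof. induction m; simpl. ring. rewrite IHm. ring. Qed.

Lemma Cpow_mul_l (a b : CC) n : ((a * b) ^ n = a ^ n * b ^ n)%C.
Proof. induction n; simpl. ring. rewrite IHn. ring. Qed.

Lemma ex_re a t : Ent a -> ex_series (fun n => Re (a n * RtoC t ^ n)%C).
Proof.
  intros Ha. apply (ex_series_le (K:=R_AbsRing) (V:=R_CompleteNormedModule) _ (fun n => Cmod (a n) * Rabs t ^ n)).
  - intros n. apply (Rle_trans _ (Cmod (a n * RtoC t ^ n)%C)). exact (re_le_Cmod' _).
    rewrite Cmod_mult, Cmod_pow, Cmod_R. lra.
  - apply Ha, Rabs_pos.
Qed.

Lemma ex_im a t : Ent a -> ex_series (fun n => Im (a n * RtoC t ^ n)%C).
Proof.
  intros Ha. apply (ex_series_le (K:=R_AbsRing) (V:=R_CompleteNormedModule) _ (fun n => Cmod (a n) * Rabs t ^ n)).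
  - intros n. apply (Rle_trans _ (Cmod (a n * RtoC t ^ n)%C)). exact (im_le_Cmod' _).
    rewrite Cmod_mult, Cmod_pow, Cmod_R. lra.
  - apply Ha, Rabs_pos.
Qed.

Lemma pe_add a b t : Ent a -> Ent b ->
  pseries_eval (fun n => a n + b n)%C t = (pseries_eval a t + pseries_eval b t)%C.
Proof.
  intros Ha Hb. unfold pseries_eval, csum. unfold Cplus at 3. simpl. f_equal.
  - rewrite <- Series_plus by (apply ex_re; auto). apply Series_ext. intros n.
    replace ((a n + b n) * RtoC t ^ n)%C with (a n * RtoC t ^ n + b n * RtoC t ^ n)%C by ring.
    simpl; ring.
  - rewrite <- Series_plus by (apply ex_im; auto). apply Series_ext. intros n.
    simpl; ring.
Qed.

Lemma C_ext (z w : CC) : Re z = Re w -> Im z = Im w -> z = w.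
Proof. destruct z, w. unfold Re, Im; simpl. intros -> ->. reflexivity. Qed.

Lemma re_pe a t : Re (pseries_eval a t) = Series (fun n => Re (a n * RtoC t ^ n)%C).
Proof. reflexivity. Qed.
Lemma im_pe a t : Im (pseries_eval a t) = Series (fun n => Im (a n * RtoC t ^ n)%C).
Proof. reflexivity. Qed.

Lemma pe_scal c a t : Ent a ->
  pseries_eval (fun n => c * a n)%C t = (c * pseries_eval a t)%C.
Proof.
  intros Ha. apply C_ext.
  - rewrite re_mult, !re_pe, im_pe.
    rewrite (Series_ext _ (fun n => Re c * Re (a n * RtoC t ^ n)%C + (- Im c) * Im (a n * RtoC t ^ n)%C)).
    + rewrite Series_plus, !Series_scal_l. ring.
      apply (ex_series_scal (V:=R_NormedModule) (Re c)), ex_re; auto.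
      apply (ex_series_scal (V:=R_NormedModule) (- Im c)), ex_im; auto.
    + intros n. rewrite <- Cmult_assoc, re_mult. ring.
  - rewrite im_mult, !im_pe, re_pe.
    rewrite (Series_ext _ (fun n => Re c * Im (a n * RtoC t ^ n)%C + Im c * Re (a n * RtoC t ^ n)%C)).
    + rewrite Series_plus, !Series_scal_l. ring.
      apply (ex_series_scal (V:=R_NormedModule) (Re c)), ex_im; auto.
      apply (ex_series_scal (V:=R_NormedModule) (Im c)), ex_re; auto.
    + intros n. rewrite <- Cmult_assoc, im_mult. ring.
Qed.

Lemma pe_zero t : pseries_eval (fun _ => 0%C) t = 0%C.
Proof.
  unfold pseries_eval, csum.
  rewrite (Series_ext _ (fun _ => 0)), (Series_ext (fun n => Im _) (fun _ => 0)).
  rewrite Series_0'. reflexivity.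
  intros n. rewrite Cmult_0_l. reflexivity.
  intros n. rewrite Cmult_0_l. reflexivity.
Qed.

Lemma Ebasis_pe alpha k lam t : Ebasis alpha k lam t = pseries_eval (Bf alpha k lam) t.
Proof.
  assert (Hterm : forall n, (Bf alpha k lam (k + n) * RtoC t ^ (k + n))%C =
     (RtoC (t ^ k) * (RtoC (Ecoef alpha (n + k) * INR (fact (n + k)) / INR (fact n)) * (lam * RtoC t) ^ n))%C).
  { intros n. unfold Bf. replace (k + n - k)%nat with n by lia.
    assert (E : Ecoef alpha (k + n) * INR (ff (k + n) k) = Ecoef alpha (n + k) * INR (fact (n + k)) / INR (fact n)).
    { rewrite (Nat.add_comm n k), ff_fact, mult_INR. field. apply INR_fact_neq_0. }
    rewrite E, Cpow_add, Cpow_mul_l, RtoC_pow. ring. }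
  assert (Hz : forall m, (m < k)%nat -> (Bf alpha k lam m * RtoC t ^ m)%C = 0%C).
  { intros m Hm. unfold Bf. rewrite ff_zero by lia. simpl (INR 0). rewrite Rmult_0_r.
    rewrite !Cmult_0_l. reflexivity. }
  unfold Ebasis, Eder. rewrite <- RtoC_pow. apply C_ext.
  - rewrite re_scal_l, re_pe. unfold csum; simpl (Re (_, _)).
    rewrite (Series_incr_n_aux (fun m => _ (Bf alpha k lam m * RtoC t ^ m)%C) k) by (intros m Hm; cbv beta; rewrite Hz by auto; reflexivity).
    rewrite <- Series_scal_l. apply Series_ext. intros n. rewrite Hterm, re_scal_l. reflexivity.
  - rewrite im_scal_l, im_pe. unfold csum; simpl (Im (_, _)).
    rewrite (Series_incr_n_aux (fun m => _ (Bf alpha k lam m * RtoC t ^ m)%C) k) by (intros m Hm; cbv beta; rewrite Hz by auto; reflexivity).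
    rewrite <- Series_scal_l. apply Series_ext. intros n. rewrite Hterm, im_scal_l. reflexivity.
Qed.

Lemma sum_n_Re (a : nat -> CC) N : sum_n (fun n => Re (a n)) N = Re (sum_n a N).
Proof.
  induction N. rewrite !sum_O. reflexivity.
  rewrite !sum_Sn, IHN. reflexivity.
Qed.

Lemma sum_n_Im (a : nat -> CC) N : sum_n (fun n => Im (a n)) N = Im (sum_n a N).
Proof.
  induction N. rewrite !sum_O. reflexivity.
  rewrite !sum_Sn, IHN. reflexivity.
Qed.

Lemma Re_series (a : nat -> CC) : @ex_series C_AbsRing C_NormedModule a -> ex_series (fun n => Re (a n)).
Proof.
  intros [l Hl]. exists (Re l). unfold is_series in *.
  apply (filterlim_ext (fun N => Re (sum_n a N))). intros N; rewrite sum_n_Re; reflexivity.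
  apply (filterlim_comp _ _ _ (sum_n a) Re eventually (locally l) (locally (Re l))); auto.
  intros P [eps HP]. exists eps. intros y Hy. apply HP. destruct Hy as [H1 H2]. exact H1.
Qed.

Lemma Im_series (a : nat -> CC) : @ex_series C_AbsRing C_NormedModule a -> ex_series (fun n => Im (a n)).
Proof.
  intros [l Hl]. exists (Im l). unfold is_series in *.
  apply (filterlim_ext (fun N => Im (sum_n a N))). intros N; rewrite sum_n_Im; reflexivity.
  apply (filterlim_comp _ _ _ (sum_n a) Im eventually (locally l) (locally (Im l))); auto.
  intros P [eps HP]. exists eps. intros y Hy. apply HP. destruct Hy as [H1 H2]. exact H2.
Qed.

Lemma Ent_of_entire x : entire_coeffs x -> Ent x.
Proof.
  intros Hx R HR. set (S := 2 * (R + 1)).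
  assert (HS : 0 < S) by (unfold S; lra).
  assert (Hu : ex_series (fun n => Re (x n) * S ^ n)).
  { apply (ex_series_ext (fun n => Re (x n * RtoC S ^ n)%C)).
    intros n. rewrite <- RtoC_pow, re_scal_r. reflexivity.
    apply Re_series, Hx. }
  assert (Hv : ex_series (fun n => Im (x n) * S ^ n)).
  { apply (ex_series_ext (fun n => Im (x n * RtoC S ^ n)%C)).
    intros n. rewrite <- RtoC_pow, im_scal_r. reflexivity.
    apply Im_series, Hx. }
  apply ex_series_lim_0, is_lim_seq_Reals in Hu. apply ex_series_lim_0, is_lim_seq_Reals in Hv.
  destruct (Hu 1 ltac:(lra)) as [N1 HN1]. destruct (Hv 1 ltac:(lra)) as [N2 HN2].
  apply (ex_series_incr_n _ (N1 + N2)).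
  apply ex_series_nonneg_le with (fun k => scal 2 ((/2) ^ (N1 + N2 + k))).
  - intros k. set (n := (N1 + N2 + k)%nat).
    specialize (HN1 n ltac:(unfold n; lia)). specialize (HN2 n ltac:(unfold n; lia)).
    unfold R_dist in *. rewrite Rminus_0_r in HN1, HN2.
    unfold scal; simpl; unfold mult; simpl.
    pose proof (pow_le R n HR). split. apply Rmult_le_pos; auto. apply Cmod_ge_0.
    assert (Hq : 0 <= R / S <= / 2) by (split; [apply Rdiv_le_0_compat; lra|];
      apply Rmult_le_reg_r with S; auto; unfold Rdiv; rewrite Rmult_assoc, Rinv_l, Rmult_1_r by lra; unfold S; lra).
    assert (HRn : R ^ n = S ^ n * (R / S) ^ n) by (rewrite <- Rpow_mult_distr; f_equal; field; lra).
    assert (Hq2 : (R / S) ^ n <= (/2) ^ n) by (apply pow_incr; lra).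
    assert (HSn : 0 < S ^ n) by (apply pow_lt; auto).
    rewrite Rabs_mult, (Rabs_pos_eq (S ^ n)) in HN1, HN2 by lra.
    pose proof (Cmod_le_ReIm (x n)) as Hc.
    pose proof (pow_le (R / S) n ltac:(lra)) as Hq3.
    assert (Cmod (x n) * R ^ n <= (Rabs (Re (x n)) * S ^ n + Rabs (Im (x n)) * S ^ n) * (R / S) ^ n).
    { rewrite HRn. replace ((Rabs (Re (x n)) * S ^ n + Rabs (Im (x n)) * S ^ n) * (R / S) ^ n)
        with ((Rabs (Re (x n)) + Rabs (Im (x n))) * (S ^ n * (R / S) ^ n)) by ring.
      apply Rmult_le_compat_r; auto. apply Rmult_le_pos; lra. }
    assert ((Rabs (Re (x n)) * S ^ n + Rabs (Im (x n)) * S ^ n) * (R / S) ^ n <= 2 * (/2) ^ n).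
    { apply Rle_trans with (2 * (R / S) ^ n). apply Rmult_le_compat_r; lra. lra. }
    lra.
  - apply (ex_series_scal (V:=R_NormedModule)).
    apply (ex_series_incr_n (fun k => (/2) ^ k) (N1 + N2)). apply ex_series_geom.
    rewrite Rabs_pos_eq; lra.
Qed.

Section Ident.
Variable p : nat -> R.
Hypothesis Hp : forall R, 0 <= R -> ex_series (fun n => Rabs (p n) * R ^ n).

Lemma absconv_shift k R : 0 <= R -> ex_series (fun n => Rabs (p (n + k)) * R ^ n).
Proof.
  intros HR. set (R1 := R + 1). assert (H1 : 0 < R1) by (unfold R1; lra).
  assert (E : ex_series (fun n => Rabs (p (n + k)) * R1 ^ n)).
  { apply (ex_series_ext (fun n => scal (/ R1 ^ k) (Rabs (p (k + n)) * R1 ^ (k + n)))).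
    - intros n. unfold scal; simpl; unfold mult; simpl. rewrite pow_add, (Nat.add_comm k n).
      pose proof (pow_lt R1 k H1). field. lra.
    - apply (ex_series_scal (V:=R_NormedModule)).
      apply (ex_series_incr_n (fun n => Rabs (p n) * R1 ^ n) k). apply Hp. lra. }
  apply ex_series_nonneg_le with (fun n => Rabs (p (n + k)) * R1 ^ n); auto.
  intros n. pose proof (Rabs_pos (p (n + k))). pose proof (pow_le R n HR).
  split. apply Rmult_le_pos; auto. apply Rmult_le_compat_l; auto. apply pow_incr; unfold R1; lra.
Qed.

Lemma ex_shift_t k t : ex_series (fun n => p (n + k) * t ^ n).
Proof.
  apply ex_series_Rabs. apply (ex_series_ext (fun n => Rabs (p (n + k)) * Rabs t ^ n)).
  intros n. rewrite Rabs_mult, RPow_abs. reflexivity.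
  apply absconv_shift, Rabs_pos.
Qed.

Lemma id_step k : (forall t, 0 < t -> Series (fun n => p (n + k) * t ^ n) = 0) ->
  p k = 0 /\ forall t, 0 < t -> Series (fun n => p (n + S k) * t ^ n) = 0.
Proof.
  intros H.
  assert (D : forall t, 0 < t -> Series (fun n => p (n + k) * t ^ n) =
     p k + t * Series (fun n => p (n + S k) * t ^ n)).
  { intros t Ht. rewrite Series_incr_1 by apply ex_shift_t. simpl (0 + k)%nat. 
    rewrite <- Series_scal_l. f_equal. simpl; ring. apply Series_ext. intros n.
    replace (S n + k)%nat with (n + S k)%nat by lia. simpl. ring. }
  set (M := Series (fun n => Rabs (p (n + S k)) * 1 ^ n)).
  assert (HQ : forall t, 0 < t <= 1 -> Rabs (Series (fun n => p (n + S k) * t ^ n)) <= M).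
  { intros t Ht. eapply Rle_trans. apply Series_Rabs.
    apply (ex_series_ext (fun n => Rabs (p (n + S k)) * Rabs t ^ n)).
    intros n. rewrite Rabs_mult, RPow_abs. reflexivity. apply absconv_shift, Rabs_pos.
    apply Series_le. intros n. split. apply Rabs_pos. rewrite Rabs_mult, <- RPow_abs.
    apply Rmult_le_compat_l. apply Rabs_pos. apply pow_incr. rewrite Rabs_pos_eq; lra.
    apply absconv_shift; lra. }
  assert (Hpk : forall t, 0 < t <= 1 -> Rabs (p k) <= t * M).
  { intros t Ht. specialize (D t ltac:(lra)). rewrite H in D by lra.
    replace (p k) with (- (t * Series (fun n => p (n + S k) * t ^ n))) by lra.
    rewrite Rabs_Ropp, Rabs_mult, Rabs_pos_eq by lra. apply Rmult_le_compat_l. lra. apply HQ; auto. }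
  assert (HM : 0 <= M) by (eapply Rle_trans; [apply Rabs_pos|apply (HQ 1); lra]).
  assert (Hk : p k = 0).
  { destruct (Req_dec (p k) 0) as [|Hne]; auto. exfalso.
    pose proof (Rabs_pos_lt _ Hne) as Ha.
    set (t := Rmin 1 (Rabs (p k) / (2 * (M + 1)))).
    assert (Ht : 0 < t <= 1).
    { unfold t. split. apply Rmin_glb_lt. lra. apply Rdiv_lt_0_compat; lra. apply Rmin_l. }
    specialize (Hpk t Ht).
    assert (t <= Rabs (p k) / (2 * (M + 1))) by apply Rmin_r.
    assert (t * M <= Rabs (p k) / (2 * (M + 1)) * M) by (apply Rmult_le_compat_r; auto).
    assert (Rabs (p k) / (2 * (M + 1)) * M < Rabs (p k)).
    { apply Rmult_lt_reg_r with (2 * (M + 1)). lra.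
      replace (Rabs (p k) / (2 * (M + 1)) * M * (2 * (M + 1))) with (Rabs (p k) * M) by (field; lra).
      nra. }
    lra. }
  split; auto. intros t Ht. specialize (D t Ht). rewrite H, Hk in D by auto.
  assert (t * Series (fun n => p (n + S k) * t ^ n) = 0) by lra.
  apply Rmult_integral in H0. destruct H0; auto. lra.
Qed.

Lemma ident_real : (forall t, 0 < t -> Series (fun n => p n * t ^ n) = 0) -> forall n, p n = 0.
Proof.
  intros H.
  assert (A : forall k, forall t, 0 < t -> Series (fun n => p (n + k) * t ^ n) = 0).
  { induction k. intros t Ht. rewrite <- (H t Ht). apply Series_ext. intros n. rewrite Nat.add_0_r. auto.
    apply id_step; auto. }
  intros n. apply (id_step n (A n)).
Qed.
End Ident.

Lemma ident_C d : Ent d -> (forall t, 0 < t -> pseries_eval d t = 0%C) -> forall n, d n = 0%C.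
Proof.
  intros Hd H n.
  assert (Hre : forall n, Re (d n) = 0).
  { apply ident_real.
    - intros R HR. apply ex_series_nonneg_le with (fun n => Cmod (d n) * R ^ n); auto.
      intros m. pose proof (pow_le R m HR). split. apply Rmult_le_pos; auto. apply Rabs_pos.
      apply Rmult_le_compat_r; auto. apply re_le_Cmod'.
    - intros t Ht. transitivity (Re (pseries_eval d t)).
      rewrite re_pe. apply Series_ext. intros m. rewrite <- RtoC_pow, re_scal_r. reflexivity.
      rewrite H by auto. reflexivity. }
  assert (Him : forall n, Im (d n) = 0).
  { apply ident_real.
    - intros R HR. apply ex_series_nonneg_le with (fun n => Cmod (d n) * R ^ n); auto.
      intros m. pose proof (pow_le R m HR). split. apply Rmult_le_pos; auto. apply Rabs_pos.
      apply Rmult_le_compat_r; auto. apply im_le_Cmod'.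
    - intros t Ht. transitivity (Im (pseries_eval d t)).
      rewrite im_pe. apply Series_ext. intros m. rewrite <- RtoC_pow, im_scal_r. reflexivity.
      rewrite H by auto. reflexivity. }
  apply C_ext. rewrite Hre; reflexivity. rewrite Him; reflexivity.
Qed.

Lemma fold_Cplus_z (l : list CC) z : fold_right Cplus z l = (fold_right Cplus (RtoC 0) l + z)%C.
Proof. induction l; simpl. ring. rewrite IHl. ring. Qed.

Lemma fsum_0 f : fsum 0 f = RtoC 0.
Proof. reflexivity. Qed.

Lemma fsum_S n f : fsum (S n) f = (fsum n f + f n)%C.
Proof.
  unfold fsum. rewrite seq_S, map_app, fold_right_app. simpl.
  rewrite fold_Cplus_z. f_equal. ring.
Qed.

Lemma fsum_ext K f g : (forall i, (i < K)%nat -> f i = g i) -> fsum K f = fsum K g.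
Proof.
  induction K; intros H. reflexivity.
  rewrite !fsum_S, (H K) by lia. rewrite IHK. reflexivity. intros; apply H; lia.
Qed.

Lemma fsum_zero K : fsum K (fun _ => RtoC 0) = RtoC 0.
Proof. induction K. reflexivity. rewrite fsum_S, IHK. ring. Qed.

Lemma fsum_zero' K f : (forall i, (i < K)%nat -> f i = RtoC 0) -> fsum K f = RtoC 0.
Proof. intros H. rewrite (fsum_ext K f (fun _ => RtoC 0)) by auto. apply fsum_zero. Qed.

Lemma fsum_plus K f g : (fsum K f + fsum K g)%C = fsum K (fun i => f i + g i)%C.
Proof. induction K. rewrite !fsum_0. ring. rewrite !fsum_S, <- IHK. ring. Qed.

Lemma fsum_scal K c f : (c * fsum K f)%C = fsum K (fun i => c * f i)%C.
Proof. induction K. rewrite !fsum_0. ring. rewrite !fsum_S, <- IHK. ring. Qed.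

Lemma fsum_ind K f i0 : (i0 < K)%nat -> (forall i, (i < K)%nat -> i <> i0 -> f i = RtoC 0) -> fsum K f = f i0.
Proof.
  induction K; intros Hi H. lia.
  rewrite fsum_S. destruct (Nat.eq_dec i0 K) as [->|Hne].
  - rewrite fsum_zero'. ring. intros i Hi'. apply H; lia.
  - rewrite IHK by (auto; lia). rewrite (H K) by lia. ring.
Qed.

Section Fin.
Variable alpha : R.
Hypothesis Hal : 0 < alpha < 1.

Lemma Ent_fsum K (F : nat -> nat -> CC) : (forall j, Ent (F j)) -> Ent (fun n => fsum K (fun j => F j n)).
Proof.
  intros H. induction K.
  - apply Ent_ext with (fun _ => 0%C). apply Ent_zero. intros; reflexivity.
  - apply Ent_ext with (fun n => fsum K (fun j => F j n) + F K n)%C. apply Ent_add; auto.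
    intros n; rewrite fsum_S; reflexivity.
Qed.

Lemma pe_fsum K (F : nat -> nat -> CC) t : (forall j, Ent (F j)) ->
  pseries_eval (fun n => fsum K (fun j => F j n)) t = fsum K (fun j => pseries_eval (F j) t).
Proof.
  intros H. induction K.
  - rewrite fsum_0. change (fun n => fsum 0 (fun j => F j n)) with (fun _ : nat => RtoC 0). apply pe_zero.
  - replace (fun n => fsum (S K) (fun j => F j n)) with (fun n => fsum K (fun j => F j n) + F K n)%C
      by (apply functional_extensionality; intros n; rewrite fsum_S; reflexivity).
    rewrite pe_add, IHK, fsum_S; auto. apply Ent_fsum; auto.
Qed.

Lemma InSpan_fsum N K (F : nat -> nat -> CC) : (forall j, (j < K)%nat -> InSpan alpha N (F j)) ->
  InSpan alpha N (fun n => fsum K (fun j => F j n)).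
Proof.
  induction K; intros H.
  - apply InSpan_ext with (fun _ => 0%C). apply isp0. intros; reflexivity.
  - apply InSpan_ext with (fun n => fsum K (fun j => F j n) + F K n)%C.
    apply ispAdd. apply IHK; intros; apply H; lia. apply H; lia.
    intros n; rewrite fsum_S; reflexivity.
Qed.

End Fin.

Lemma cnt_app lamf mult L1 L2 v : cnt lamf mult (L1 ++ L2) v = (cnt lamf mult L1 v + cnt lamf mult L2 v)%nat.
Proof. induction L1; simpl. reflexivity. unfold cnt in *; simpl. rewrite IHL1. lia. Qed.

Lemma cnt_seq_S lamf mult r v : cnt lamf mult (seq 0 (S r)) v =
  (cnt lamf mult (seq 0 r) v + (if CeqD v (lamf r) then mult r else 0))%nat.
Proof. rewrite seq_S, cnt_app. replace (0 + r)%nat with r by lia. unfold cnt at 2. cbn [fold_right]. lia. Qed.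

Lemma cnt_none lamf mult r v : (forall l, (l < r)%nat -> lamf l <> v) -> cnt lamf mult (seq 0 r) v = 0%nat.
Proof.
  induction r; intros H. reflexivity.
  rewrite cnt_seq_S, IHr by (intros; apply H; lia).
  destruct (CeqD v (lamf r)). exfalso; apply (H r); auto. reflexivity.
Qed.

Lemma cnt_one (lamf : nat -> CC) mult r l0 :
  (forall i j, (i < r)%nat -> (j < r)%nat -> lamf i = lamf j -> i = j) -> (l0 < r)%nat ->
  cnt lamf mult (seq 0 r) (lamf l0) = mult l0.
Proof.
  induction r; intros Hd Hl. lia.
  rewrite cnt_seq_S. destruct (Nat.eq_dec l0 r) as [->|Hne].
  - rewrite cnt_none. destruct (CeqD (lamf r) (lamf r)); [lia|congruence].
    intros l Hl' E. apply Hd in E; lia.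
  - rewrite IHr by (auto; lia). destruct (CeqD (lamf l0) (lamf r)) as [E|]; [|lia].
    apply Hd in E; lia.
Qed.

Section Conv.
Variable alpha : R.
Hypothesis Hal : 0 < alpha < 1.
Variable r : nat.
Variable lam : nat -> CC.
Variable mult : nat -> nat.
Variable J : nat.
Hypothesis Hdist : forall i j, (i < r)%nat -> (j < r)%nat -> lam i = lam j -> i = j.

Lemma conv1 (mu : CC) (Hmu : forall l, (l < r)%nat -> mu <> lam l) u :
  InSpan alpha (fun v => ((if CeqD v mu then S J else 0) + cnt lam mult (seq 0 r) v)%nat) u ->
  exists (c : nat -> nat -> CC) (d : nat -> CC),
    forall t, 0 <= t ->
      pseries_eval u t
      = (fsum r (fun l => fsum (mult l) (fun k => c l k * Ebasis alpha k (lam l) t))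
         + fsum (S J) (fun j => d j * Ebasis alpha j mu t))%C.
Proof.
  intros H. induction H as [|k v Hk|u1 u2 H1 IH1 H2 IH2|cc u1 H1 IH1].
  - exists (fun _ _ => 0%C), (fun _ => 0%C). intros t Ht. rewrite pe_zero.
    rewrite (fsum_zero' r) by (intros; apply fsum_zero'; intros; ring).
    rewrite (fsum_zero' (S J)) by (intros; ring). ring.
  - revert Hk. destruct (CeqD v mu) as [->|Hne]; intros Hk.
    + rewrite cnt_none in Hk by (intros l Hl E; apply (Hmu l Hl); auto).
      exists (fun _ _ => 0%C), (fun j => if Nat.eqb j k then 1%C else 0%C). intros t _. rewrite <- Ebasis_pe.
      rewrite (fsum_zero' r) by (intros; apply fsum_zero'; intros; ring).
      rewrite (fsum_ind (S J) _ k) by (try lia; intros i Hi Hne; rewrite (proj2 (Nat.eqb_neq i k) Hne); ring).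
      rewrite Nat.eqb_refl. ring.
    + destruct (classic (exists l, (l < r)%nat /\ lam l = v)) as [[l [Hl E]] | Hno].
      * subst v. rewrite cnt_one in Hk by auto.
        exists (fun l' k' => if andb (Nat.eqb l' l) (Nat.eqb k' k) then 1%C else 0%C), (fun _ => 0%C).
        intros t _. rewrite <- Ebasis_pe.
        rewrite (fsum_zero' (S J)) by (intros; ring).
        rewrite (fsum_ind r _ l) by (auto; intros i Hi Hne'; apply fsum_zero'; intros k' _;
          rewrite (proj2 (Nat.eqb_neq i l) Hne'); simpl; ring).
        rewrite (fsum_ind (mult l) _ k) by (try lia; intros i Hi Hne'; rewrite Nat.eqb_refl,
          (proj2 (Nat.eqb_neq i k) Hne'); simpl; ring).
        rewrite !Nat.eqb_refl. simpl. ring.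
      * rewrite cnt_none in Hk. lia. intros l Hl E. apply Hno. exists l; auto.
  - destruct IH1 as [c1 [d1 E1]], IH2 as [c2 [d2 E2]].
    exists (fun l k => c1 l k + c2 l k)%C, (fun j => d1 j + d2 j)%C. intros t Ht.
    rewrite pe_add by (eapply Ent_InSpan; eauto). rewrite E1, E2 by auto.
    assert (A : fsum r (fun l => fsum (mult l) (fun k => (c1 l k + c2 l k) * Ebasis alpha k (lam l) t))%C
      = (fsum r (fun l => fsum (mult l) (fun k => c1 l k * Ebasis alpha k (lam l) t))
        + fsum r (fun l => fsum (mult l) (fun k => c2 l k * Ebasis alpha k (lam l) t)))%C).
    { rewrite fsum_plus. apply fsum_ext. intros l _. rewrite fsum_plus. apply fsum_ext. intros; ring. }
    assert (B : fsum (S J) (fun j => (d1 j + d2 j) * Ebasis alpha j mu t)%C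
      = (fsum (S J) (fun j => d1 j * Ebasis alpha j mu t) + fsum (S J) (fun j => d2 j * Ebasis alpha j mu t))%C).
    { rewrite fsum_plus. apply fsum_ext. intros; ring. }
    rewrite A, B. ring.
  - destruct IH1 as [c1 [d1 E1]].
    exists (fun l k => cc * c1 l k)%C, (fun j => cc * d1 j)%C. intros t Ht.
    rewrite pe_scal by (eapply Ent_InSpan; eauto). rewrite E1 by auto.
    rewrite Cmult_plus_distr_l, !fsum_scal. f_equal.
    + apply fsum_ext. intros l _. rewrite fsum_scal. apply fsum_ext. intros; ring.
    + apply fsum_ext. intros; ring.
Qed.

Lemma conv2 l0 (Hl0 : (l0 < r)%nat) u :
  InSpan alpha (fun v => ((if CeqD v (lam l0) then S J else 0) + cnt lam mult (seq 0 r) v)%nat) u ->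
  exists (c : nat -> nat -> CC) (d : nat -> CC),
    forall t, 0 <= t ->
      pseries_eval u t
      = (fsum r (fun l => if Nat.eqb l l0 then RtoC 0
                  else fsum (mult l) (fun k => c l k * Ebasis alpha k (lam l) t))
         + fsum (S (J + mult l0)) (fun k => d k * Ebasis alpha k (lam l0) t))%C.
Proof.
  intros H. induction H as [|k v Hk|u1 u2 H1 IH1 H2 IH2|cc u1 H1 IH1].
  - exists (fun _ _ => 0%C), (fun _ => 0%C). intros t Ht. rewrite pe_zero.
    rewrite (fsum_zero' r) by (intros; destruct (Nat.eqb i l0); [reflexivity|]; apply fsum_zero'; intros; ring).
    rewrite (fsum_zero' _) by (intros; ring). ring.
  - revert Hk. destruct (CeqD v (lam l0)) as [->|Hne]; intros Hk.
    + rewrite cnt_one in Hk by auto.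
      exists (fun _ _ => 0%C), (fun j => if Nat.eqb j k then 1%C else 0%C). intros t _. rewrite <- Ebasis_pe.
      rewrite (fsum_zero' r) by (intros; destruct (Nat.eqb i l0); [reflexivity|]; apply fsum_zero'; intros; ring).
      rewrite (fsum_ind _ _ k) by (try lia; intros i Hi Hne; rewrite (proj2 (Nat.eqb_neq i k) Hne); ring).
      rewrite Nat.eqb_refl. ring.
    + destruct (classic (exists l, (l < r)%nat /\ lam l = v)) as [[l [Hl E]] | Hno].
      * subst v. rewrite cnt_one in Hk by auto.
        assert (Hll0 : l <> l0) by (intros ->; apply Hne; reflexivity).
        exists (fun l' k' => if andb (Nat.eqb l' l) (Nat.eqb k' k) then 1%C else 0%C), (fun _ => 0%C).
        intros t _. rewrite <- Ebasis_pe.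
        rewrite (fsum_zero' (S (J + mult l0))) by (intros; ring).
        rewrite (fsum_ind r _ l) by (first [assumption | (intros i Hi Hne'; destruct (Nat.eqb i l0); [reflexivity|];
          apply fsum_zero'; intros k' _; rewrite (proj2 (Nat.eqb_neq i l) Hne'); simpl; ring)]).
        rewrite (proj2 (Nat.eqb_neq l l0) Hll0).
        rewrite (fsum_ind (mult l) _ k) by (try lia; intros i Hi Hne'; rewrite Nat.eqb_refl,
          (proj2 (Nat.eqb_neq i k) Hne'); simpl; ring).
        rewrite !Nat.eqb_refl. simpl. ring.
      * rewrite cnt_none in Hk. lia. intros l Hl E. apply Hno. exists l; auto.
  - destruct IH1 as [c1 [d1 E1]], IH2 as [c2 [d2 E2]].
    exists (fun l k => c1 l k + c2 l k)%C, (fun j => d1 j + d2 j)%C. intros t Ht.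
    rewrite pe_add by (eapply Ent_InSpan; eauto). rewrite E1, E2 by auto.
    assert (A : fsum r (fun l => if Nat.eqb l l0 then RtoC 0 else fsum (mult l) (fun k => (c1 l k + c2 l k) * Ebasis alpha k (lam l) t))%C
      = (fsum r (fun l => if Nat.eqb l l0 then RtoC 0 else fsum (mult l) (fun k => c1 l k * Ebasis alpha k (lam l) t))
        + fsum r (fun l => if Nat.eqb l l0 then RtoC 0 else fsum (mult l) (fun k => c2 l k * Ebasis alpha k (lam l) t)))%C).
    { rewrite fsum_plus. apply fsum_ext. intros l _. destruct (Nat.eqb l l0). ring.
      rewrite fsum_plus. apply fsum_ext. intros; ring. }
    assert (B : fsum (S (J + mult l0)) (fun j => (d1 j + d2 j) * Ebasis alpha j (lam l0) t)%C
      = (fsum (S (J + mult l0)) (fun j => d1 j * Ebasis alpha j (lam l0) t) + fsum (S (J + mult l0)) (fun j => d2 j * Ebasis alpha j (lam l0) t))%C).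
    { rewrite fsum_plus. apply fsum_ext. intros; ring. }
    rewrite A, B. ring.
  - destruct IH1 as [c1 [d1 E1]].
    exists (fun l k => cc * c1 l k)%C, (fun j => cc * d1 j)%C. intros t Ht.
    rewrite pe_scal by (eapply Ent_InSpan; eauto). rewrite E1 by auto.
    rewrite Cmult_plus_distr_l, !fsum_scal. f_equal.
    + apply fsum_ext. intros l _. destruct (Nat.eqb l l0). ring. rewrite fsum_scal. apply fsum_ext. intros; ring.
    + apply fsum_ext. intros; ring.
Qed.

End Conv.

Theorem mainTheorem19
  (alpha : R) (r : nat) (lam : nat -> CC) (mult : nat -> nat)
  (J : nat) (beta : nat -> CC) (mu : CC) (x : nat -> CC) :
  0 < alpha < 1 ->
  (0 < r)%nat ->
  (forall i j, (i < r)%nat -> (j < r)%nat -> lam i = lam j -> i = j) ->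
  (forall l, (l < r)%nat -> (1 <= mult l)%nat) ->
  entire_coeffs x ->
  (forall t, 0 <= t ->
     pseries_eval (LDpoly alpha r lam mult x) t
     = fsum (S J) (fun j => (beta j * Ebasis alpha j mu t)%C)) ->
  ((forall l, (l < r)%nat -> mu <> lam l) ->
     exists (c : nat -> nat -> CC) (d : nat -> CC),
       forall t, 0 <= t ->
         pseries_eval x t
         = (fsum r (fun l => fsum (mult l) (fun k => c l k * Ebasis alpha k (lam l) t))
            + fsum (S J) (fun j => d j * Ebasis alpha j mu t))%C)
  /\
  (forall l0, (l0 < r)%nat -> mu = lam l0 ->
     exists (c : nat -> nat -> CC) (d : nat -> CC),
       forall t, 0 <= t ->
         pseries_eval x t
         = (fsum r (fun l => if Nat.eqb l l0 then RtoC 0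
                     else fsum (mult l) (fun k => c l k * Ebasis alpha k (lam l) t))
            + fsum (S (J + mult l0)) (fun k => d k * Ebasis alpha k (lam l0) t))%C).
Proof.
  intros Hal Hr Hdist Hmult Hx Heq.
  set (N0 := fun v => if CeqD v mu then S J else 0%nat).
  set (zc := fun n => fsum (S J) (fun j => beta j * Bf alpha j mu n)%C).
  set (y := LDpoly alpha r lam mult x).
  assert (Hy : Ent y) by (apply Ent_fold; auto; apply Ent_of_entire; auto).
  assert (Hz : Ent zc) by (apply Ent_fsum; intros; apply Ent_scal, Ent_Bf; auto).
  assert (Hpz : forall t, pseries_eval zc t = fsum (S J) (fun j => (beta j * Ebasis alpha j mu t)%C)).
  { intros t. unfold zc. rewrite pe_fsum by (intros; apply Ent_scal, Ent_Bf; auto).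
    apply fsum_ext. intros j _. rewrite pe_scal, Ebasis_pe by (apply Ent_Bf; auto). reflexivity. }
  assert (Hyz : forall n, y n = zc n).
  { set (d := fun n => (y n + (-1) * zc n)%C).
    assert (Hd : forall n, d n = 0%C).
    { apply ident_C. unfold d. apply Ent_add; auto. apply Ent_scal; auto.
      intros t Ht. unfold d. rewrite pe_add, pe_scal by (try apply Ent_scal; auto).
      unfold y. rewrite Heq, <- Hpz by lra. ring. }
    intros n. specialize (Hd n). unfold d in Hd.
    apply (f_equal (fun w => w + zc n)%C) in Hd. rewrite <- (Cplus_0_l (zc n)), <- Hd. ring. }
  assert (Hsp : InSpan alpha N0 y).
  { apply InSpan_ext with zc; [|intros; rewrite Hyz; auto].
    unfold zc. apply InSpan_fsum. intros j Hj. apply ispScal, ispB. unfold N0.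
    destruct (CeqD mu mu); [lia|congruence]. }
  apply fold_span in Hsp. unfold N0 in Hsp.
  split.
  - intros Hmu. apply conv1; auto.
  - intros l0 Hl0 ->. apply conv2; auto.
all: exact Hal.
Qed.
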